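(* Let $A\in\mathfrak{H}_n$, $B\in\mathfrak{M}_n$, $N\in\mathbb{N}$. Then the $N$-approximant satisfies $\big(e^{tA/N}e^{B/N}\big)^N=\sum_{\lambda\in ch_N(\sigma(A))}e^{t\lambda}M_N(\{\lambda\})$ for all $t\in\mathbb{C}$, and the total variation of the discrete measure $M_N$ satisfies \[ \sum_{\lambda\in ch_N(\sigma(A))}\|M_N(\{\lambda\})\|\le n\,e^{n\|B\|}. \]
   Context: Let $\lambda_1,\dots,\lambda_l$ be the distinct eigenvalues of the Hermitian matrix $A$ and $E_{\lambda_1},\dots,E_{\lambda_l}$ the corresponding orthogonal spectral projectors. For $(k_1,\dots,k_N)\in\{1,\dots,l\}^N$, $M_{k_1,\dots,k_N}=E_{\lambda_{k_1}}e^{B/N}\cdots E_{\lambda_{k_N}}e^{B/N}$. The $N$-convex hull $ch_N(\sigma(A))$ is the set of all numbers $\sum_j\frac{n_j}{N}\lambda_j$ with $n_j$ non-negative integers, $n_1+\dots+n_l=N$. For $\lambda\in ch_N(\sigma(A))$, $M_N(\{\lambda\})=\sum M_{k_1,\dots,k_N}$ over all $(k_1,\dots,k_N)$ with $\frac{\lambda_{k_1}+\cdots+\lambda_{k_N}}{N}=\lambda$. $\|\cdot\|$ is the operator norm. *)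

(* Defs.v *)
From Stdlib Require Import Reals Lra Lia List Arith ClassicalEpsilon.
Open Scope R_scope.

Record Cx := mkC { Re : R ; Im : R }.
Definition RtoC (x : R) : Cx := mkC x 0.
Definition C0 : Cx := RtoC 0.
Definition C1 : Cx := RtoC 1.
Definition Cadd (z w : Cx) : Cx := mkC (Re z + Re w) (Im z + Im w).
Definition Cmul (z w : Cx) : Cx :=
  mkC (Re z * Re w - Im z * Im w) (Re z * Im w + Im z * Re w).
Definition Cconj (z : Cx) : Cx := mkC (Re z) (- Im z).
Definition Cmod (z : Cx) : R := sqrt (Re z ^ 2 + Im z ^ 2).
Definition Cexp (z : Cx) : Cx := mkC (exp (Re z) * cos (Im z)) (exp (Re z) * sin (Im z)).

Fixpoint Csum (n : nat) (f : nat -> Cx) : Cx :=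
  match n with O => C0 | S m => Cadd (Csum m f) (f m) end.
Fixpoint Rsum (n : nat) (f : nat -> R) : R :=
  match n with O => 0 | S m => Rsum m f + f m end.
Fixpoint Nsum (n : nat) (f : nat -> nat) : nat :=
  match n with O => O | S m => (Nsum m f + f m)%nat end.

(* ---------- vectors and n x n matrices (only indices < n matter) ---------- *)
Definition Vec := nat -> Cx.
Definition Mat := nat -> nat -> Cx.

Definition Mzero : Mat := fun _ _ => C0.
Definition Mid : Mat := fun i j => if Nat.eqb i j then C1 else C0.
Definition Madd (X Y : Mat) : Mat := fun i j => Cadd (X i j) (Y i j).
Definition Mscale (c : Cx) (X : Mat) : Mat := fun i j => Cmul c (X i j).
Definition Mmul (n : nat) (X Y : Mat) : Mat :=
  fun i j => Csum n (fun k => Cmul (X i k) (Y k j)).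
Fixpoint Mpow (n : nat) (X : Mat) (k : nat) : Mat :=
  match k with O => Mid | S k' => Mmul n (Mpow n X k') X end.
Definition Madj (X : Mat) : Mat := fun i j => Cconj (X j i).
Definition Mvec (n : nat) (X : Mat) (v : Vec) : Vec :=
  fun i => Csum n (fun j => Cmul (X i j) (v j)).
Definition Vscale (c : Cx) (v : Vec) : Vec := fun i => Cmul c (v i).

Definition Meq (n : nat) (X Y : Mat) : Prop :=
  forall i j, (i < n)%nat -> (j < n)%nat -> X i j = Y i j.
Definition Veq (n : nat) (v w : Vec) : Prop :=
  forall i, (i < n)%nat -> v i = w i.
Definition Vnonzero (n : nat) (v : Vec) : Prop :=
  exists i, (i < n)%nat /\ v i <> C0.

Definition Msum_list (Xs : list Mat) : Mat := fold_right Madd Mzero Xs.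

Definition is_Mexp (n : nat) (A X : Mat) : Prop :=
  forall i j, (i < n)%nat -> (j < n)%nat ->
    let s := fun m => Csum (S m)
               (fun k => Cmul (RtoC (/ INR (fact k))) (Mpow n A k i j)) in
    Un_cv (fun m => Re (s m)) (Re (X i j)) /\ Un_cv (fun m => Im (s m)) (Im (X i j)).
Definition Mexp (n : nat) (A : Mat) : Mat := epsilon (inhabits Mzero) (is_Mexp n A).

Definition Vnorm (n : nat) (v : Vec) : R := sqrt (Rsum n (fun i => Cmod (v i) ^ 2)).
Definition opnorm_set (n : nat) (X : Mat) : R -> Prop :=
  fun r => exists v : Vec, Vnorm n v <= 1 /\ r = Vnorm n (Mvec n X v).
Definition opnorm (n : nat) (X : Mat) : R :=
  epsilon (inhabits 0) (is_lub (opnorm_set n X)).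

Definition hermitian (n : nat) (A : Mat) : Prop := Meq n A (Madj A).
Definition is_eigenvalue (n : nat) (A : Mat) (mu : Cx) : Prop :=
  exists v, Vnonzero n v /\ Veq n (Mvec n A v) (Vscale mu v).
Definition is_spectral_projector (n : nat) (A : Mat) (mu : R) (E : Mat) : Prop :=
  Meq n (Mmul n E E) E /\ Meq n (Madj E) E /\
  forall v : Vec, Veq n (Mvec n A v) (Vscale (RtoC mu) v) <-> Veq n (Mvec n E v) v.
Definition spectral_data (n : nat) (A : Mat) (l : nat) (lam : nat -> R) (E : nat -> Mat)
  : Prop :=
  (forall j k, (j < l)%nat -> (k < l)%nat -> lam j = lam k -> j = k) /\
  (forall k, (k < l)%nat -> is_eigenvalue n A (RtoC (lam k))) /\
  (forall mu, is_eigenvalue n A mu -> exists k, (k < l)%nat /\ mu = RtoC (lam k)) /\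
  (forall k, (k < l)%nat -> is_spectral_projector n A (lam k) (E k)).

Fixpoint tuples (l N : nat) : list (list nat) :=
  match N with
  | O => nil :: nil
  | S N' => flat_map (fun k => map (cons k) (tuples l N')) (seq 0 l)
  end.

(* M_{k_1..k_N} = E_{k_1} e^{B/N} ... E_{k_N} e^{B/N}, with eB = e^{B/N} *)
Definition Mtuple (n : nat) (E : nat -> Mat) (eB : Mat) (ks : list nat) : Mat :=
  fold_right (fun k acc => Mmul n (Mmul n (E k) eB) acc) Mid ks.

Definition tuple_mean (lam : nat -> R) (N : nat) (ks : list nat) : R :=
  fold_right Rplus 0 (map lam ks) / INR N.

Definition MN (n l N : nat) (lam : nat -> R) (E : nat -> Mat) (B : Mat) (x : R) : Mat :=
  let eB := Mexp n (Mscale (RtoC (/ INR N)) B) in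
  Msum_list (map (fun ks => if Req_EM_T (tuple_mean lam N ks) x
                            then Mtuple n E eB ks else Mzero) (tuples l N)).

Definition in_chN (l N : nat) (lam : nat -> R) (x : R) : Prop :=
  exists ns : nat -> nat, Nsum l ns = N /\
    x = Rsum l (fun j => INR (ns j) / INR N * lam j).

Definition enumerates_chN (l N : nat) (lam : nat -> R) (L : list R) : Prop :=
  NoDup L /\ forall x, In x L <-> in_chN l N lam x.

(* Main.v *)
Require Import Defs.
From Stdlib Require Import Reals Lra Lia List Arith ClassicalEpsilon Ring Field Classical.
From mathcomp Require all_boot all_algebra Rstruct complex spectral sesquilinear.
Require Import Defs.
Open Scope R_scope.

Module Bridge.
Import all_boot all_algebra Rstruct complex spectral sesquilinear.
Import GRing.Theory Num.Theory.
Local Open Scope ring_scope.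
Local Open Scope sesquilinear_scope.

Notation CR := (complex.complex R).
Definition toC (z : Cx) : CR := complex.Complex (Defs.Re z) (Defs.Im z).
Definition ofC (x : CR) : Cx := mkC (complex.Re x) (complex.Im x).

Lemma ofCK z : ofC (toC z) = z. Proof. by case: z. Qed.
Lemma ofC_add x y : ofC (x + y) = Cadd (ofC x) (ofC y).
Proof. by case: x; case: y. Qed.
Lemma ofC_mul x y : ofC (x * y) = Cmul (ofC x) (ofC y).
Proof. case: x => a b; case: y => c d; rewrite /ofC /Cmul /=. f_equal. Qed.
Lemma ofC0 : ofC 0 = C0. Proof. by []. Qed.

Lemma ofC_sum n (F : nat -> CR) :
  ofC (\sum_(i < n) F i) = Csum n (fun i => ofC (F i)).
Proof.
elim: n => [|n IH]; first by rewrite big_ord0.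
by rewrite big_ord_recr /= ofC_add IH.
Qed.

Lemma Csum_ext0 n f g : (forall i, f i = g i) -> Csum n f = Csum n g.
Proof. by move=> H; elim: n => //= n ->; rewrite H. Qed.

Definition fromMx n (M : 'M[CR]_n) : nat -> nat -> CR :=
  fun i j => match @insub _ (fun k => k < n)%N _ i, @insub _ (fun k => k < n)%N _ j with
             | Some i', Some j' => M i' j' | _, _ => 0 end.

Arguments fromMx {n}.
Lemma fromMxE n (M : 'M[CR]_n) (i j : 'I_n) : fromMx M i j = M i j.
Proof. by rewrite /fromMx !valK. Qed.

Lemma conjtoC z : Num.Def.conjC (toC z) = toC (Cconj z).
Proof. by case: z. Qed.

Lemma herm_eigbasis (n : nat) (A : Mat) : Defs.hermitian n A ->
  exists (U : nat -> Vec) (d : nat -> Cx),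
    (forall i, lt i n -> Veq n (Mvec n A (U i)) (Vscale (d i) (U i))) /\
    (forall v : Vec, exists c : nat -> Cx,
        Veq n v (fun r => Csum n (fun i => Cmul (c i) (U i r)))).
Proof.
move=> HA.
pose AM : 'M[CR]_n := \matrix_(i, j) toC (A j i).
have AMh : map_mx Num.Def.conjC (trmx AM) = AM.
  apply/matrixP => i j; rewrite !mxE conjtoC.
  have := HA j i (ltP (ltn_ord j)) (ltP (ltn_ord i)); rewrite /Madj => ->. by [].
have AMn : AM \is normalmx by apply/normalmxP; rewrite AMh.
have /orthomx_spectralP := AMn.
set P := spectralmx AM; set D := spectral_diag AM => AMe.
have PU : P \in unitmx := spectral_unit AM.
have PAD : P *m AM = diag_mx D *m P.
  by rewrite {1}AMe !mulmxA mulmxV // mul1mx.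
exists (fun i r => ofC (fromMx P i r)).
exists (fun i => ofC (fromMx (diag_mx D) i i)).
split.
  move=> i /ltP Hi s /ltP Hs.
  pose i' := Ordinal Hi; pose s' := Ordinal Hs.
  have := congr1 (fun M : 'M_n => M i' s') PAD.
  rewrite mul_diag_mx /= !mxE => E1.
  rewrite /Mvec /Vscale.
  have -> : fromMx (diag_mx D) i i = diag_mx D i' i' by rewrite -fromMxE.
  have -> : fromMx P i s = P i' s' by rewrite -fromMxE.
  rewrite mxE eqxx mulr1n -ofC_mul -E1.
  have -> : Csum n (fun j => Cmul (A s j) (ofC (fromMx P i j))) =
            Csum n (fun j => ofC (toC (A s j) * fromMx P i j)).
    by apply: Csum_ext0 => j; rewrite ofC_mul ofCK.
  rewrite -ofC_sum; congr ofC; apply: eq_bigr => k _.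
  rewrite (_ : fromMx P i k = P i' k); last by rewrite -fromMxE.
  by rewrite mxE mulrC.
move=> v.
pose vM : 'rV[CR]_n := \row_j toC (v j).
pose c := vM *m invmx P.
have cP : c *m P = vM by rewrite /c mulmxKV.
pose cr : nat -> CR := fun i => match @insub _ (fun k => k < n)%N _ i with
                                 | Some i' => c 0 i' | None => 0 end.
exists (fun i => ofC (cr i)).
move=> r /ltP Hr; pose r' := Ordinal Hr.
have := congr1 (fun M : 'rV_n => M 0 r') cP; rewrite /= !mxE => E1.
rewrite (_ : v r = ofC (toC (v r))); last by rewrite ofCK.
have E2 : toC (v r) = \sum_(j < n) (cr j * fromMx P j r).
  rewrite (_ : toC (v r) = toC (v r')) // -E1; apply: eq_bigr => k _.
  rewrite /cr valK (_ : fromMx P k r = P k r') //.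
  by rewrite (_ : r = nat_of_ord r') // fromMxE.
rewrite E2 (ofC_sum n (fun k => cr k * fromMx P k r)); apply: Csum_ext0 => i; by rewrite ofC_mul.
Qed.
End Bridge.


Open Scope R_scope.

Lemma Cx_ext z w : Re z = Re w -> Im z = Im w -> z = w.
Proof. destruct z, w; simpl; intros; subst; reflexivity. Qed.

Definition Copp z := mkC (- Re z) (- Im z).
Definition Csub z w := Cadd z (Copp w).

Lemma Cring : ring_theory C0 C1 Cadd Cmul Csub Copp (@eq Cx).
Proof. constructor; intros; apply Cx_ext; unfold Cadd,Cmul,Csub,Copp,C0,C1,RtoC; simpl; ring. Qed.
Add Ring Cring : Cring.

Lemma RtoC_add x y : RtoC (x + y) = Cadd (RtoC x) (RtoC y).
Proof. apply Cx_ext; unfold Cadd, RtoC; simpl; ring. Qed.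
Lemma RtoC_mul x y : RtoC (x * y) = Cmul (RtoC x) (RtoC y).
Proof. apply Cx_ext; unfold Cmul, RtoC; simpl; ring. Qed.
Lemma RtoC_0 : RtoC 0 = C0. Proof. reflexivity. Qed.
Lemma RtoC_1 : RtoC 1 = C1. Proof. reflexivity. Qed.

Lemma Csum_ext n f g : (forall i, (i < n)%nat -> f i = g i) -> Csum n f = Csum n g.
Proof. induction n; simpl; intros H; auto. rewrite IHn by (intros; apply H; lia). rewrite H by lia; auto. Qed.
Lemma Csum_add n f g : Csum n (fun i => Cadd (f i) (g i)) = Cadd (Csum n f) (Csum n g).
Proof. induction n; simpl. unfold C0, RtoC, Cadd; apply Cx_ext; simpl; ring. rewrite IHn; ring. Qed.
Lemma Csum_0 n : Csum n (fun _ => C0) = C0.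
Proof. induction n; simpl; auto. rewrite IHn; ring. Qed.
Lemma Csum_scal_l n c f : Cmul c (Csum n f) = Csum n (fun i => Cmul c (f i)).
Proof. induction n; simpl. ring. rewrite <- IHn; ring. Qed.
Lemma Csum_scal_r n c f : Cmul (Csum n f) c = Csum n (fun i => Cmul (f i) c).
Proof. induction n; simpl. ring. rewrite <- IHn; ring. Qed.
Lemma Csum_swap n m (f : nat -> nat -> Cx) :
  Csum n (fun i => Csum m (fun j => f i j)) = Csum m (fun j => Csum n (fun i => f i j)).
Proof.
  induction n; simpl. rewrite Csum_0; auto.
  rewrite IHn, <- Csum_add; auto.
Qed.
Lemma Csum_S_l n f : Csum (S n) f = Cadd (f O) (Csum n (fun i => f (S i))).
Proof. induction n; simpl in *. ring. rewrite IHn. ring. Qed.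
Lemma Csum_delta n j f : (j < n)%nat ->
  Csum n (fun i => if Nat.eqb i j then f i else C0) = f j.
Proof.
  induction n; intros H; [lia|]. simpl.
  destruct (Nat.eq_dec j n).
  - subst. rewrite Nat.eqb_refl. rewrite (Csum_ext n _ (fun _ => C0)).
    rewrite Csum_0; ring. intros i Hi. destruct (Nat.eqb_spec i n); [lia|auto].
  - rewrite IHn by lia. destruct (Nat.eqb_spec n j); [lia|]. ring.
Qed.
Lemma Csum_delta' n j f : (j < n)%nat ->
  Csum n (fun i => if Nat.eqb j i then f i else C0) = f j.
Proof.
  intros H. rewrite <- (Csum_delta n j f H). apply Csum_ext; intros.
  rewrite Nat.eqb_sym; auto.
Qed.
Lemma Re_Csum n f : Re (Csum n f) = Rsum n (fun i => Re (f i)).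
Proof. induction n; simpl; auto. rewrite IHn; auto. Qed.
Lemma Im_Csum n f : Im (Csum n f) = Rsum n (fun i => Im (f i)).
Proof. induction n; simpl; auto. rewrite IHn; auto. Qed.
Lemma Cconj_Csum n f : Cconj (Csum n f) = Csum n (fun i => Cconj (f i)).
Proof. induction n; simpl. apply Cx_ext; unfold Cconj, C0, RtoC; simpl; ring.
  rewrite <- IHn. apply Cx_ext; unfold Cconj, Cadd; simpl; ring. Qed.
Lemma Cconj_mul z w : Cconj (Cmul z w) = Cmul (Cconj z) (Cconj w).
Proof. apply Cx_ext; unfold Cconj, Cmul; simpl; ring. Qed.
Lemma Cconj_add z w : Cconj (Cadd z w) = Cadd (Cconj z) (Cconj w).
Proof. apply Cx_ext; unfold Cconj, Cadd; simpl; ring. Qed.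
Lemma Cconj_invol z : Cconj (Cconj z) = z.
Proof. apply Cx_ext; unfold Cconj; simpl; ring. Qed.
Lemma Cconj_RtoC x : Cconj (RtoC x) = RtoC x.
Proof. apply Cx_ext; unfold Cconj, RtoC; simpl; ring. Qed.

Lemma Rsum_ext n f g : (forall i, (i < n)%nat -> f i = g i) -> Rsum n f = Rsum n g.
Proof. induction n; simpl; intros H; auto. rewrite IHn by (intros; apply H; lia). rewrite H by lia; auto. Qed.
Lemma Rsum_le n f g : (forall i, (i < n)%nat -> f i <= g i) -> Rsum n f <= Rsum n g.
Proof. induction n; simpl; intros H. lra. assert (f n <= g n) by (apply H; lia).
  assert (Rsum n f <= Rsum n g) by (apply IHn; intros; apply H; lia). lra. Qed.
Lemma Rsum_nonneg n f : (forall i, (i < n)%nat -> 0 <= f i) -> 0 <= Rsum n f.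
Proof. intros H. induction n; simpl. lra. assert (0 <= f n) by (apply H; lia).
  assert (0 <= Rsum n f) by (apply IHn; intros; apply H; lia). lra. Qed.
Lemma Rsum_add n f g : Rsum n (fun i => f i + g i) = Rsum n f + Rsum n g.
Proof. induction n; simpl. ring. rewrite IHn; ring. Qed.
Lemma Rsum_scal n c f : Rsum n (fun i => c * f i) = c * Rsum n f.
Proof. induction n; simpl. ring. rewrite IHn; ring. Qed.
Lemma Rsum_0 n : Rsum n (fun _ => 0) = 0.
Proof. induction n; simpl; auto. rewrite IHn; ring. Qed.
Lemma Rsum_swap n m (f : nat -> nat -> R) :
  Rsum n (fun i => Rsum m (fun j => f i j)) = Rsum m (fun j => Rsum n (fun i => f i j)).
Proof. induction n; simpl. rewrite Rsum_0; auto. rewrite IHn, <- Rsum_add; auto. Qed.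
Lemma Rsum_sum_f n f : Rsum (S n) f = sum_f_R0 f n.
Proof. induction n; simpl in *. ring. rewrite <- IHn. simpl. auto. Qed.
Lemma Rsum_zero_terms n f : (forall i, (i < n)%nat -> 0 <= f i) -> Rsum n f = 0 ->
  forall i, (i < n)%nat -> f i = 0.
Proof.
  induction n; intros H0 H1 i Hi; [lia|]. simpl in H1.
  assert (0 <= f n) by (apply H0; lia).
  assert (0 <= Rsum n f) by (apply Rsum_nonneg; intros; apply H0; lia).
  destruct (Nat.eq_dec i n). subst; lra.
  apply IHn; try lra; try lia. intros; apply H0; lia.
Qed.

Fixpoint Cpow (z : Cx) (m : nat) : Cx :=
  match m with O => C1 | S m' => Cmul (Cpow z m') z end.

Definition CLsum {A} (xs : list A) (g : A -> Cx) : Cx := fold_right Cadd C0 (map g xs).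

Lemma CLsum_nil {A} (g : A -> Cx) : CLsum nil g = C0. Proof. reflexivity. Qed.
Lemma CLsum_cons {A} x xs (g : A -> Cx) : CLsum (x :: xs) g = Cadd (g x) (CLsum xs g).
Proof. reflexivity. Qed.
Lemma CLsum_app {A} xs ys (g : A -> Cx) : CLsum (xs ++ ys) g = Cadd (CLsum xs g) (CLsum ys g).
Proof. induction xs; simpl; rewrite ?CLsum_cons, ?CLsum_nil. ring.
  unfold CLsum in *. simpl. rewrite IHxs. ring. Qed.
Lemma CLsum_ext {A} xs (f g : A -> Cx) : (forall x, In x xs -> f x = g x) -> CLsum xs f = CLsum xs g.
Proof. induction xs; intros H; auto. rewrite !CLsum_cons. rewrite H by (simpl; auto).
  rewrite IHxs; auto. intros; apply H; simpl; auto. Qed.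
Lemma CLsum_add {A} xs (f g : A -> Cx) :
  CLsum xs (fun x => Cadd (f x) (g x)) = Cadd (CLsum xs f) (CLsum xs g).
Proof. induction xs. unfold CLsum; simpl; ring. rewrite !CLsum_cons, IHxs. ring. Qed.
Lemma CLsum_scal {A} xs c (f : A -> Cx) : CLsum xs (fun x => Cmul c (f x)) = Cmul c (CLsum xs f).
Proof. induction xs. unfold CLsum; simpl; ring. rewrite !CLsum_cons, IHxs. ring. Qed.
Lemma CLsum_zero {A} xs : CLsum xs (fun _ : A => C0) = C0.
Proof. induction xs; auto. rewrite CLsum_cons, IHxs; ring. Qed.
Lemma CLsum_map {A B} (h : A -> B) xs g : CLsum (map h xs) g = CLsum xs (fun x => g (h x)).
Proof. unfold CLsum. rewrite map_map. auto. Qed.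
Lemma CLsum_flat_map {A B} (h : A -> list B) xs g :
  CLsum (flat_map h xs) g = CLsum xs (fun x => CLsum (h x) g).
Proof. induction xs; auto. simpl. rewrite CLsum_app, CLsum_cons, IHxs. auto. Qed.
Lemma CLsum_swap {A B} (xs : list A) (ys : list B) g :
  CLsum xs (fun x => CLsum ys (fun y => g x y)) = CLsum ys (fun y => CLsum xs (fun x => g x y)).
Proof. induction xs. simpl. rewrite CLsum_zero. auto.
  rewrite CLsum_cons, IHxs, <- CLsum_add. auto. Qed.
Lemma CLsum_Csum {A} n (xs : list A) g :
  Csum n (fun r => CLsum xs (fun x => g r x)) = CLsum xs (fun x => Csum n (fun r => g r x)).
Proof. induction n; simpl. rewrite CLsum_zero; auto. rewrite IHn, <- CLsum_add. auto. Qed.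
Lemma CLsum_seq_Csum n g : CLsum (seq 0 n) g = Csum n g.
Proof. induction n. auto. rewrite seq_S, CLsum_app, IHn. simpl. unfold CLsum; simpl. ring. Qed.
Lemma CLsum_single {A} (eqd : forall x y : A, {x = y} + {x <> y}) xs (a : A) g :
  NoDup xs -> In a xs ->
  CLsum xs (fun x => if eqd a x then g x else C0) = g a.
Proof.
  induction xs; intros Hn Hi. inversion Hi.
  inversion Hn; subst. rewrite CLsum_cons. destruct (eqd a a0).
  - subst. rewrite (CLsum_ext _ _ (fun _ => C0)). rewrite CLsum_zero; ring.
    intros x Hx. destruct (eqd a0 x); auto. subst; contradiction.
  - destruct Hi. subst; contradiction. rewrite IHxs; auto. ring.
Qed.

Lemma Msum_list_ij (Xs : list Mat) i j : Msum_list Xs i j = CLsum Xs (fun X => X i j).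
Proof. induction Xs; auto. simpl. unfold Madd. rewrite IHXs. auto. Qed.
Lemma Msum_list_map_ij {A} (f : A -> Mat) xs i j :
  Msum_list (map f xs) i j = CLsum xs (fun x => f x i j).
Proof. rewrite Msum_list_ij, CLsum_map. auto. Qed.

Lemma Meq_refl n X : Meq n X X. Proof. intros i j _ _; auto. Qed.
Lemma Meq_sym n X Y : Meq n X Y -> Meq n Y X. Proof. intros H i j Hi Hj; symmetry; auto. Qed.
Lemma Meq_trans n X Y Z : Meq n X Y -> Meq n Y Z -> Meq n X Z.
Proof. intros H1 H2 i j Hi Hj; rewrite H1, H2; auto. Qed.

Lemma Mmul_assoc n X Y Z i j : Mmul n (Mmul n X Y) Z i j = Mmul n X (Mmul n Y Z) i j.
Proof.
  unfold Mmul. rewrite (Csum_ext _ _ (fun k => Csum n (fun r => Cmul (X i r) (Cmul (Y r k) (Z k j))))).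
  rewrite Csum_swap. apply Csum_ext; intros. rewrite Csum_scal_l. auto.
  intros. rewrite Csum_scal_r. apply Csum_ext; intros. ring.
Qed.
Lemma Mmul_Meq n X X' Y Y' : Meq n X X' -> Meq n Y Y' -> Meq n (Mmul n X Y) (Mmul n X' Y').
Proof. intros H1 H2 i j Hi Hj. unfold Mmul. apply Csum_ext; intros. rewrite H1, H2; auto. Qed.
Lemma Mmul_Mid_l n X i j : (i < n)%nat -> Mmul n Mid X i j = X i j.
Proof. intros Hi. unfold Mmul, Mid.
  rewrite (Csum_ext _ _ (fun k => if Nat.eqb i k then X k j else C0)). apply (Csum_delta' n i (fun k => X k j)); auto.
  intros k _. destruct (Nat.eqb i k); ring. Qed.
Lemma Mmul_Mid_r n X i j : (j < n)%nat -> Mmul n X Mid i j = X i j.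
Proof. intros Hj. unfold Mmul, Mid.
  rewrite (Csum_ext _ _ (fun k => if Nat.eqb k j then X i k else C0)). apply (Csum_delta n j (fun k => X i k)); auto.
  intros k _. destruct (Nat.eqb k j); ring. Qed.
Lemma Mmul_add_r n X Y Z i j : Mmul n X (Madd Y Z) i j = Cadd (Mmul n X Y i j) (Mmul n X Z i j).
Proof. unfold Mmul, Madd. rewrite <- Csum_add. apply Csum_ext; intros; ring. Qed.
Lemma Mmul_add_l n X Y Z i j : Mmul n (Madd X Y) Z i j = Cadd (Mmul n X Z i j) (Mmul n Y Z i j).
Proof. unfold Mmul, Madd. rewrite <- Csum_add. apply Csum_ext; intros; ring. Qed.
Lemma Mmul_scale_l n c X Y i j : Mmul n (Mscale c X) Y i j = Cmul c (Mmul n X Y i j).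
Proof. unfold Mmul, Mscale. rewrite Csum_scal_l. apply Csum_ext; intros; ring. Qed.
Lemma Mmul_scale_r n c X Y i j : Mmul n X (Mscale c Y) i j = Cmul c (Mmul n X Y i j).
Proof. unfold Mmul, Mscale. rewrite Csum_scal_l. apply Csum_ext; intros; ring. Qed.
Lemma Mmul_sum_r {A} n X (f : A -> Mat) xs i j :
  Mmul n X (Msum_list (map f xs)) i j = CLsum xs (fun x => Mmul n X (f x) i j).
Proof. unfold Mmul. rewrite <- CLsum_Csum. apply Csum_ext; intros k _.
  rewrite Msum_list_map_ij. rewrite <- CLsum_scal. auto. Qed.
Lemma Mmul_sum_l {A} n X (f : A -> Mat) xs i j :
  Mmul n (Msum_list (map f xs)) X i j = CLsum xs (fun x => Mmul n (f x) X i j).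
Proof. unfold Mmul. rewrite <- CLsum_Csum. apply Csum_ext; intros k _.
  rewrite Msum_list_map_ij.
  replace (Cmul (CLsum xs (fun x => f x i k)) (X k j)) with (Cmul (X k j) (CLsum xs (fun x => f x i k))) by ring.
  rewrite <- (CLsum_scal _ (X k j)).
  apply CLsum_ext; intros; ring. Qed.
Lemma Mmul_zero_r n X i j : Mmul n X Mzero i j = C0.
Proof. unfold Mmul, Mzero. transitivity (Csum n (fun _ => C0)); [apply Csum_ext; intros; ring | apply Csum_0]. Qed.
Lemma Mmul_zero_l n X i j : Mmul n Mzero X i j = C0.
Proof. unfold Mmul, Mzero. transitivity (Csum n (fun _ => C0)); [apply Csum_ext; intros; ring | apply Csum_0]. Qed.

Lemma Mpow_S_l n X k i j : (i < n)%nat -> (j < n)%nat ->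
  Mpow n X (S k) i j = Mmul n X (Mpow n X k) i j.
Proof.
  revert i j. induction k; intros i j Hi Hj.
  - simpl. rewrite Mmul_Mid_l, Mmul_Mid_r; auto.
  - change (Mpow n X (S (S k))) with (Mmul n (Mpow n X (S k)) X).
    change (Mpow n X (S k)) with (Mmul n (Mpow n X k) X) at 2.
    rewrite <- Mmul_assoc. apply Mmul_Meq; [|apply Meq_refl|auto|auto].
    intros a b Ha Hb. apply IHk; auto.
Qed.
Lemma Mpow_Meq n X Y k : Meq n X Y -> Meq n (Mpow n X k) (Mpow n Y k).
Proof. intros H. induction k; simpl. apply Meq_refl. apply Mmul_Meq; auto. Qed.

Lemma Mvec_mul n X Y v i : Mvec n (Mmul n X Y) v i = Mvec n X (Mvec n Y v) i.
Proof.
  unfold Mvec, Mmul.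
  rewrite (Csum_ext _ _ (fun j => Csum n (fun k => Cmul (X i k) (Cmul (Y k j) (v j))))).
  rewrite Csum_swap. apply Csum_ext; intros. rewrite Csum_scal_l. auto.
  intros. rewrite Csum_scal_r. apply Csum_ext; intros. ring.
Qed.
Lemma Mvec_Veq n X v w i : Veq n v w -> Mvec n X v i = Mvec n X w i.
Proof. intros H. unfold Mvec. apply Csum_ext; intros. rewrite H; auto. Qed.
Lemma Mvec_Meq n X Y v i : Meq n X Y -> (i < n)%nat -> Mvec n X v i = Mvec n Y v i.
Proof. intros H Hi. unfold Mvec. apply Csum_ext; intros. rewrite H; auto. Qed.
Lemma Mvec_Mid n v i : (i < n)%nat -> Mvec n Mid v i = v i.
Proof. intros Hi. unfold Mvec, Mid.
  rewrite (Csum_ext _ _ (fun k => if Nat.eqb i k then v k else C0)). apply (Csum_delta' n i v); auto.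
  intros k _. destruct (Nat.eqb i k); ring. Qed.

Definition ev (c : nat) : Vec := fun r => if Nat.eqb r c then C1 else C0.
Lemma Mvec_ev n X c i : (c < n)%nat -> Mvec n X (ev c) i = X i c.
Proof. intros Hc. unfold Mvec, ev.
  rewrite (Csum_ext _ _ (fun k => if Nat.eqb k c then X i k else C0)). apply (Csum_delta n c (fun k => X i k)); auto.
  intros k _. destruct (Nat.eqb k c); ring. Qed.
Lemma Meq_of_Mvec n X Y : (forall v, Veq n (Mvec n X v) (Mvec n Y v)) -> Meq n X Y.
Proof. intros H i j Hi Hj. rewrite <- !(Mvec_ev n _ j i) by auto. apply H; auto. Qed.

Lemma sqrt_le_of_sq a b : 0 <= b -> a <= b * b -> sqrt a <= b.
Proof. intros Hb H. rewrite <- (sqrt_square b) by auto. apply sqrt_le_1_alt; auto. Qed.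
Lemma le_sqrt_mul x y z : x * x <= y * z -> 0 <= y -> 0 <= z -> x <= sqrt y * sqrt z.
Proof.
  intros H Hy Hz. rewrite <- sqrt_mult by auto.
  destruct (Rle_or_lt x 0). assert (0 <= sqrt (y*z)) by apply sqrt_pos. lra.
  rewrite <- (sqrt_square x) by lra. apply sqrt_le_1_alt; auto.
Qed.

Lemma Cmod_sq z : Cmod z ^ 2 = Re z * Re z + Im z * Im z.
Proof. unfold Cmod. rewrite pow2_sqrt. ring. nra. Qed.
Lemma Cmod_nonneg z : 0 <= Cmod z. Proof. apply sqrt_pos. Qed.
Lemma Cmod_mul z w : Cmod (Cmul z w) = Cmod z * Cmod w.
Proof. unfold Cmod, Cmul. simpl. rewrite <- sqrt_mult by nra. f_equal. ring. Qed.
Lemma Cmod_add z w : Cmod (Cadd z w) <= Cmod z + Cmod w.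
Proof.
  assert (H : Re z * Re w + Im z * Im w <= Cmod z * Cmod w).
  { unfold Cmod. apply le_sqrt_mul; try nra.
    pose proof (pow2_ge_0 (Re z * Im w - Im z * Re w)). simpl in *. nra. }
  apply sqrt_le_of_sq. pose proof (Cmod_nonneg z); pose proof (Cmod_nonneg w); lra.
  pose proof (Cmod_sq z); pose proof (Cmod_sq w). simpl in *. nra.
Qed.
Lemma Cmod_C0 : Cmod C0 = 0.
Proof. unfold Cmod, C0, RtoC; cbn [Re Im]. replace (0^2+0^2) with 0 by ring. apply sqrt_0. Qed.
Lemma Cmod_RtoC x : Cmod (RtoC x) = Rabs x.
Proof. unfold Cmod, RtoC; cbn [Re Im]. replace (x^2+0^2) with (x*x) by ring. apply sqrt_Rsqr_abs. Qed.
Lemma Re_le_Cmod z : Rabs (Re z) <= Cmod z.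
Proof. unfold Cmod. rewrite <- sqrt_Rsqr_abs. apply sqrt_le_1_alt. unfold Rsqr. nra. Qed.
Lemma Im_le_Cmod z : Rabs (Im z) <= Cmod z.
Proof. unfold Cmod. rewrite <- sqrt_Rsqr_abs. apply sqrt_le_1_alt. unfold Rsqr. nra. Qed.
Lemma Cmod_Csum n f : Cmod (Csum n f) <= Rsum n (fun i => Cmod (f i)).
Proof. induction n; simpl. rewrite Cmod_C0; lra.
  pose proof (Cmod_add (Csum n f) (f n)). lra. Qed.
Lemma Cmod_Cconj z : Cmod (Cconj z) = Cmod z.
Proof. unfold Cmod, Cconj; simpl. f_equal. ring. Qed.
Lemma Cmod_zero z : Cmod z = 0 -> z = C0.
Proof. intros H. pose proof (Cmod_sq z). rewrite H in H0. apply Cx_ext; unfold C0, RtoC; simpl; nra. Qed.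

Definition Vadd (u v : Vec) : Vec := fun i => Cadd (u i) (v i).
Definition rp n (u v : Vec) := Rsum n (fun i => Re (u i) * Re (v i) + Im (u i) * Im (v i)).

Lemma rp_nonneg n v : 0 <= rp n v v.
Proof. apply Rsum_nonneg; intros; apply Rplus_le_le_0_compat; apply Rle_0_sqr. Qed.
Lemma Vnorm_rp n v : Vnorm n v = sqrt (rp n v v).
Proof. unfold Vnorm, rp. f_equal. apply Rsum_ext; intros. apply Cmod_sq. Qed.
Lemma Vnorm_nonneg n v : 0 <= Vnorm n v. Proof. apply sqrt_pos. Qed.
Lemma Vnorm_sq n v : Vnorm n v * Vnorm n v = rp n v v.
Proof. rewrite Vnorm_rp. apply sqrt_sqrt, rp_nonneg. Qed.

Lemma quad_disc p q r : 0 <= q -> (forall t, 0 <= p + 2*t*r + t*t*q) -> r*r <= p*q.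
Proof.
  intros Hq H. destruct (Req_dec q 0).
  - subst. destruct (Req_dec r 0). subst; pose proof (H 0); nra.
    pose proof (H (-(p+1)/(2*r))). replace (p + 2 * (- (p + 1) / (2 * r)) * r + - (p + 1) / (2 * r) * (- (p + 1) / (2 * r)) * 0) with (-1) in H1 by (field; auto). lra.
  - assert (q > 0 \/ q < 0) by lra. destruct H1.
    + pose proof (H (-r/q)). replace (p + 2 * (- r / q) * r + - r / q * (- r / q) * q) with (p - r*r/q) in H2 by (field; lra).
      assert (r*r/q <= p) by lra. apply Rmult_le_compat_r with (r:=q) in H3; [|lra].
      replace (r*r/q*q) with (r*r) in H3 by (field; lra). lra.
    + lra.
Qed.

Lemma rp_CS n u v : rp n u v * rp n u v <= rp n u u * rp n v v.
Proof.
  apply quad_disc. apply rp_nonneg. intros t.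
  assert (E : rp n u u + 2 * t * rp n u v + t * t * rp n v v =
    Rsum n (fun i => (Re (u i) + t * Re (v i)) * (Re (u i) + t * Re (v i)) + (Im (u i) + t * Im (v i)) * (Im (u i) + t * Im (v i)))).
  { unfold rp. rewrite <- (Rsum_scal n (2*t)), <- (Rsum_scal n (t*t)), <- !Rsum_add. apply Rsum_ext; intros; ring. }
  rewrite E. apply Rsum_nonneg; intros; apply Rplus_le_le_0_compat; apply Rle_0_sqr.
Qed.
Lemma rp_le_Vnorm n u v : rp n u v <= Vnorm n u * Vnorm n v.
Proof. rewrite !Vnorm_rp. apply le_sqrt_mul. apply rp_CS. apply rp_nonneg. apply rp_nonneg. Qed.

Lemma Vnorm_add n u v : Vnorm n (Vadd u v) <= Vnorm n u + Vnorm n v.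
Proof.
  rewrite (Vnorm_rp n (Vadd u v)). apply sqrt_le_of_sq.
  pose proof (Vnorm_nonneg n u); pose proof (Vnorm_nonneg n v); lra.
  assert (E : rp n (Vadd u v) (Vadd u v) = rp n u u + 2 * rp n u v + rp n v v).
  { unfold rp, Vadd, Cadd. simpl. rewrite <- Rsum_scal, <- !Rsum_add. apply Rsum_ext; intros; simpl; ring. }
  rewrite E. pose proof (rp_le_Vnorm n u v). pose proof (Vnorm_sq n u). pose proof (Vnorm_sq n v). nra.
Qed.
Lemma Vnorm_scale n c v : Vnorm n (Vscale c v) = Cmod c * Vnorm n v.
Proof.
  rewrite !Vnorm_rp. unfold Cmod. rewrite <- sqrt_mult by (try nra; apply rp_nonneg).
  f_equal. unfold rp. rewrite <- Rsum_scal. apply Rsum_ext; intros. unfold Vscale, Cmul; simpl. ring.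
Qed.
Lemma Vnorm_Veq n v w : Veq n v w -> Vnorm n v = Vnorm n w.
Proof. intros H. unfold Vnorm. f_equal. apply Rsum_ext; intros. rewrite H; auto. Qed.
Lemma Vnorm_zero n v : Vnorm n v = 0 -> Veq n v (fun _ => C0).
Proof.
  intros H i Hi. rewrite Vnorm_rp in H. apply sqrt_eq_0 in H; [|apply rp_nonneg].
  assert (Hnn: forall i, (i<n)%nat -> 0 <= Re (v i) * Re (v i) + Im (v i) * Im (v i)).
  { intros; apply Rplus_le_le_0_compat; apply Rle_0_sqr. }
  pose proof (Rsum_zero_terms n _ Hnn H i Hi). simpl in H0.
  pose proof (Rle_0_sqr (Re (v i))). pose proof (Rle_0_sqr (Im (v i))). unfold Rsqr in *.
  apply Cx_ext; unfold C0, RtoC; cbn [Re Im]; nra.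
Qed.
Lemma Vnorm_of_zero n v : Veq n v (fun _ => C0) -> Vnorm n v = 0.
Proof. intros H. rewrite (Vnorm_Veq n v (fun _ => C0) H). unfold Vnorm.
  rewrite (Rsum_ext _ _ (fun _ => 0)). rewrite Rsum_0. apply sqrt_0.
  intros. rewrite Cmod_C0. ring. Qed.
Lemma Cmod_le_Vnorm n v i : (i < n)%nat -> Cmod (v i) <= Vnorm n v.
Proof.
  intros Hi. unfold Vnorm. rewrite <- (sqrt_pow2 (Cmod (v i))) by apply Cmod_nonneg.
  apply sqrt_le_1_alt. induction n. lia. cbn [Rsum].
  destruct (Nat.eq_dec i n). subst.
  assert (0 <= Rsum n (fun i => Cmod (v i) ^ 2)) by (apply Rsum_nonneg; intros; apply pow2_ge_0). lra.
  assert (0 <= Cmod (v n) ^ 2) by apply pow2_ge_0. assert (Cmod (v i) ^2 <= Rsum n (fun i => Cmod (v i) ^ 2)) by (apply IHn; lia). lra.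
Qed.
Lemma Vnorm_le_Rsum n v : Vnorm n v <= Rsum n (fun i => Cmod (v i)).
Proof.
  unfold Vnorm. apply sqrt_le_of_sq. apply Rsum_nonneg; intros; apply Cmod_nonneg.
  induction n; cbn [Rsum]. lra.
  assert (0 <= Rsum n (fun i => Cmod (v i))) by (apply Rsum_nonneg; intros; apply Cmod_nonneg).
  pose proof (Cmod_nonneg (v n)). pose proof (Rmult_le_pos _ _ H H0). nra.
Qed.

Definition cip n (u v : Vec) := Csum n (fun i => Cmul (Cconj (u i)) (v i)).
Lemma Re_cip n u v : Re (cip n u v) = rp n u v.
Proof. unfold cip, rp. rewrite Re_Csum. apply Rsum_ext; intros. unfold Cmul, Cconj; simpl. ring. Qed.
Lemma cip_adj n X u v : cip n (Mvec n X u) v = cip n u (Mvec n (Madj X) v).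
Proof.
  unfold cip, Mvec, Madj.
  rewrite (Csum_ext _ _ (fun i => Csum n (fun j => Cmul (Cconj (u j)) (Cmul (Cconj (X i j)) (v i))))).
  rewrite Csum_swap. apply Csum_ext; intros. rewrite Csum_scal_l. auto.
  intros. rewrite Cconj_Csum, Csum_scal_r. apply Csum_ext; intros. rewrite Cconj_mul. ring.
Qed.
Lemma cip_Veq_r n u v w : Veq n v w -> cip n u v = cip n u w.
Proof. intros H. unfold cip. apply Csum_ext; intros. rewrite H; auto. Qed.
Lemma cip_Veq_l n u v w : Veq n v w -> cip n v u = cip n w u.
Proof. intros H. unfold cip. apply Csum_ext; intros. rewrite H; auto. Qed.
Lemma cip_scale_r n u c v : cip n u (Vscale c v) = Cmul c (cip n u v).
Proof. unfold cip, Vscale. rewrite Csum_scal_l. apply Csum_ext; intros; ring. Qed.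
Lemma cip_scale_l n u c v : cip n (Vscale c v) u = Cmul (Cconj c) (cip n v u).
Proof. unfold cip, Vscale. rewrite Csum_scal_l. apply Csum_ext; intros. rewrite Cconj_mul. ring. Qed.

Lemma Mvec_add_m n X Y v i : Mvec n (Madd X Y) v i = Cadd (Mvec n X v i) (Mvec n Y v i).
Proof. unfold Mvec, Madd. rewrite <- Csum_add. apply Csum_ext; intros; ring. Qed.
Lemma Mvec_scale_m n c X v i : Mvec n (Mscale c X) v i = Cmul c (Mvec n X v i).
Proof. unfold Mvec, Mscale. rewrite Csum_scal_l. apply Csum_ext; intros; ring. Qed.
Lemma Mvec_scale_v n X c v i : Mvec n X (Vscale c v) i = Cmul c (Mvec n X v i).
Proof. unfold Mvec, Vscale. rewrite Csum_scal_l. apply Csum_ext; intros; ring. Qed.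
Lemma Mvec_add_v n X u v i : Mvec n X (Vadd u v) i = Cadd (Mvec n X u i) (Mvec n X v i).
Proof. unfold Mvec, Vadd. rewrite <- Csum_add. apply Csum_ext; intros; ring. Qed.
Lemma Mvec_zero_v n X v i : Veq n v (fun _ => C0) -> Mvec n X v i = C0.
Proof. intros H. unfold Mvec. transitivity (Csum n (fun _ => C0)). apply Csum_ext; intros. rewrite H; auto; ring. apply Csum_0. Qed.
Lemma Mvec_sum_m {A} n (f : A -> Mat) xs v i :
  Mvec n (Msum_list (map f xs)) v i = CLsum xs (fun x => Mvec n (f x) v i).
Proof. unfold Mvec. rewrite <- CLsum_Csum. apply Csum_ext; intros k _.
  rewrite Msum_list_map_ij.
  replace (Cmul (CLsum xs (fun x => f x i k)) (v k)) with (Cmul (v k) (CLsum xs (fun x => f x i k))) by ring.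
  rewrite <- CLsum_scal. apply CLsum_ext; intros; ring. Qed.

Definition crude n X := Rsum n (fun i => Rsum n (fun j => Cmod (X i j))).
Lemma Mvec_bound_crude n X v : Vnorm n (Mvec n X v) <= crude n X * Vnorm n v.
Proof.
  eapply Rle_trans. apply Vnorm_le_Rsum. unfold crude. rewrite Rmult_comm, <- Rsum_scal.
  apply Rsum_le; intros i Hi. unfold Mvec. eapply Rle_trans. apply Cmod_Csum.
  rewrite <- Rsum_scal. apply Rsum_le; intros j Hj. rewrite Cmod_mul.
  pose proof (Cmod_le_Vnorm n v j Hj). pose proof (Cmod_nonneg (X i j)). nra.
Qed.
Lemma Vnorm_C0 n : Vnorm n (fun _ => C0) = 0.
Proof. apply Vnorm_of_zero. intros i _; auto. Qed.

Lemma opnorm_spec n X : is_lub (opnorm_set n X) (opnorm n X).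
Proof.
  unfold opnorm. apply epsilon_spec.
  destruct (completeness (opnorm_set n X)) as [m Hm].
  - exists (crude n X). intros r [v [Hv ->]]. eapply Rle_trans. apply Mvec_bound_crude.
    assert (0 <= crude n X) by (apply Rsum_nonneg; intros; apply Rsum_nonneg; intros; apply Cmod_nonneg).
    pose proof (Vnorm_nonneg n v). nra.
  - exists 0. exists (fun _ => C0). split. rewrite Vnorm_C0; lra.
    symmetry. apply Vnorm_of_zero. intros i _. apply Mvec_zero_v. intros j _; auto.
  - exists m; auto.
Qed.
Lemma opnorm_ge n X v : Vnorm n v <= 1 -> Vnorm n (Mvec n X v) <= opnorm n X.
Proof. intros H. apply (proj1 (opnorm_spec n X)). exists v; auto. Qed.
Lemma opnorm_nonneg n X : 0 <= opnorm n X.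
Proof. pose proof (opnorm_ge n X (fun _ => C0)). rewrite Vnorm_C0 in H.
  rewrite (Vnorm_of_zero n (Mvec n X (fun _ => C0))) in H. apply H; lra.
  intros i _. apply Mvec_zero_v. intros j _; auto. Qed.
Lemma opnorm_le n X K : (forall v, Vnorm n v <= 1 -> Vnorm n (Mvec n X v) <= K) -> opnorm n X <= K.
Proof. intros H. apply (proj2 (opnorm_spec n X)). intros r [v [Hv ->]]. auto. Qed.
Lemma opnorm_bound n X v : Vnorm n (Mvec n X v) <= opnorm n X * Vnorm n v.
Proof.
  destruct (Req_dec (Vnorm n v) 0) as [H0|H0].
  - rewrite (Vnorm_of_zero n (Mvec n X v)). rewrite H0, Rmult_0_r; lra.
    intros i _. apply Mvec_zero_v. apply Vnorm_zero; auto.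
  - assert (Hs : 0 < Vnorm n v) by (pose proof (Vnorm_nonneg n v); lra). set (s := Vnorm n v) in *.
    pose proof (opnorm_ge n X (Vscale (RtoC (/ s)) v)).
    rewrite Vnorm_scale, Cmod_RtoC, Rabs_right in H by (apply Rle_ge, Rlt_le, Rinv_0_lt_compat; auto).
    fold s in H. rewrite Rinv_l in H by auto.
    rewrite (Vnorm_Veq n (Mvec n X (Vscale (RtoC (/ s)) v)) (Vscale (RtoC (/ s)) (Mvec n X v))) in H.
    rewrite Vnorm_scale, Cmod_RtoC, Rabs_right in H by (apply Rle_ge, Rlt_le, Rinv_0_lt_compat; auto).
    specialize (H (Rle_refl 1)).
    apply Rmult_le_compat_r with (r := s) in H; [|lra].
    replace (/ s * Vnorm n (Mvec n X v) * s) with (Vnorm n (Mvec n X v)) in H by (field; lra). lra.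
    intros i _. unfold Vscale. apply Mvec_scale_v.
Qed.
Lemma opnorm_le_bound n X K : 0 <= K -> (forall v, Vnorm n (Mvec n X v) <= K * Vnorm n v) -> opnorm n X <= K.
Proof. intros HK H. apply opnorm_le. intros v Hv. eapply Rle_trans. apply H. nra. Qed.
Lemma opnorm_Meq n X Y : Meq n X Y -> opnorm n X <= opnorm n Y.
Proof. intros H. apply opnorm_le_bound. apply opnorm_nonneg. intros v.
  rewrite (Vnorm_Veq n (Mvec n X v) (Mvec n Y v)). apply opnorm_bound.
  intros i Hi. apply Mvec_Meq; auto. Qed.
Lemma opnorm_Meq_eq n X Y : Meq n X Y -> opnorm n X = opnorm n Y.
Proof. intros H. apply Rle_antisym; apply opnorm_Meq; auto. apply Meq_sym; auto. Qed.
Lemma opnorm_add n X Y : opnorm n (Madd X Y) <= opnorm n X + opnorm n Y.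
Proof.
  apply opnorm_le_bound. pose proof (opnorm_nonneg n X); pose proof (opnorm_nonneg n Y); lra.
  intros v. rewrite (Vnorm_Veq n _ (Vadd (Mvec n X v) (Mvec n Y v))).
  eapply Rle_trans. apply Vnorm_add. pose proof (opnorm_bound n X v). pose proof (opnorm_bound n Y v). lra.
  intros i _. apply Mvec_add_m.
Qed.
Lemma opnorm_scale n c X : opnorm n (Mscale c X) <= Cmod c * opnorm n X.
Proof.
  apply opnorm_le_bound. pose proof (opnorm_nonneg n X); pose proof (Cmod_nonneg c); nra.
  intros v. rewrite (Vnorm_Veq n _ (Vscale c (Mvec n X v))).
  rewrite Vnorm_scale. pose proof (opnorm_bound n X v). pose proof (Cmod_nonneg c). nra.
  intros i _. apply Mvec_scale_m.
Qed.
Lemma opnorm_mul n X Y : opnorm n (Mmul n X Y) <= opnorm n X * opnorm n Y.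
Proof.
  apply opnorm_le_bound. pose proof (opnorm_nonneg n X); pose proof (opnorm_nonneg n Y); nra.
  intros v. rewrite (Vnorm_Veq n _ (Mvec n X (Mvec n Y v))).
  eapply Rle_trans. apply opnorm_bound. pose proof (opnorm_bound n Y v). pose proof (opnorm_nonneg n X). nra.
  intros i _. apply Mvec_mul.
Qed.
Lemma opnorm_Mid n : opnorm n Mid <= 1.
Proof. apply opnorm_le_bound. lra. intros v. rewrite (Vnorm_Veq n _ v). lra.
  intros i Hi. apply Mvec_Mid; auto. Qed.
Lemma opnorm_zero n X : Meq n X Mzero -> opnorm n X = 0.
Proof. intros H. apply Rle_antisym; [|apply opnorm_nonneg]. apply opnorm_le_bound. lra.
  intros v. rewrite (Vnorm_of_zero n (Mvec n X v)). lra.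
  intros i Hi. rewrite (Mvec_Meq n X Mzero v i H Hi). unfold Mvec, Mzero.
  transitivity (Csum n (fun _ => C0)). apply Csum_ext; intros; ring. apply Csum_0. Qed.
Lemma Cmod_entry_le n X i j : (i < n)%nat -> (j < n)%nat -> Cmod (X i j) <= opnorm n X.
Proof.
  intros Hi Hj. rewrite <- (Mvec_ev n X j i Hj). eapply Rle_trans. apply (Cmod_le_Vnorm n); auto.
  apply opnorm_ge. unfold Vnorm.
  rewrite (Rsum_ext _ _ (fun r => if Nat.eqb r j then 1 else 0)).
  2:{ intros r _. unfold ev. destruct (Nat.eqb r j). unfold Cmod, C1, RtoC; cbn [Re Im].
      replace (1^2+0^2) with 1 by ring. rewrite sqrt_1; ring. rewrite Cmod_C0; ring. }
  clear Hi. induction n. lia. cbn [Rsum]. destruct (Nat.eqb_spec n j).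
  subst. rewrite (Rsum_ext _ _ (fun _ => 0)). rewrite Rsum_0. replace (0+1) with 1 by ring. rewrite sqrt_1; lra.
  intros r Hr. destruct (Nat.eqb_spec r j); auto; lia.
  replace (Rsum n (fun r => if Nat.eqb r j then 1 else 0) + 0) with (Rsum n (fun r => if Nat.eqb r j then 1 else 0)) by ring.
  apply IHn. lia.
Qed.
Lemma opnorm_sum {A} n (f : A -> Mat) xs :
  opnorm n (Msum_list (map f xs)) <= fold_right Rplus 0 (map (fun x => opnorm n (f x)) xs).
Proof.
  induction xs; simpl.
  - rewrite opnorm_zero. lra. apply Meq_refl.
  - eapply Rle_trans. apply opnorm_add. lra.
Qed.

Lemma Mvec_CLsum_v {X} n M (xs : list X) (g : X -> Vec) i :
  Mvec n M (fun r => CLsum xs (fun x => g x r)) i = CLsum xs (fun x => Mvec n M (g x) i).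
Proof. unfold Mvec. rewrite <- CLsum_Csum. apply Csum_ext; intros.
  rewrite <- CLsum_scal. auto. Qed.
Lemma Mvec_Csum_v n M m (c : nat -> Cx) (g : nat -> Vec) i :
  Mvec n M (fun r => Csum m (fun p => Cmul (c p) (g p r))) i = Csum m (fun p => Cmul (c p) (Mvec n M (g p) i)).
Proof. unfold Mvec. rewrite (Csum_ext n _ (fun j => Csum m (fun p => Cmul (c p) (Cmul (M i j) (g p j))))).
  rewrite Csum_swap. apply Csum_ext; intros. rewrite Csum_scal_l. auto.
  intros. rewrite Csum_scal_l. apply Csum_ext; intros. ring. Qed.

Lemma Cmul_cancel_real a b c : a <> b -> Cmul (RtoC a) c = Cmul (RtoC b) c -> c = C0.
Proof.
  intros Hab H. assert (H1 := f_equal Re H). assert (H2 := f_equal Im H).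
  unfold Cmul, RtoC in *; cbn [Re Im] in *.
  assert ((a - b) * Re c = 0) by lra. assert ((a - b) * Im c = 0) by lra.
  apply Rmult_integral in H0. apply Rmult_integral in H3.
  apply Cx_ext; unfold C0, RtoC; cbn [Re Im]; lra.
Qed.

Section Spec.
Variables (n : nat) (A : Mat) (l : nat) (lam : nat -> R) (E : nat -> Mat).
Hypothesis HA : hermitian n A.
Hypothesis HS : spectral_data n A l lam E.

Definition eigv (mu : R) (w : Vec) := Veq n (Mvec n A w) (Vscale (RtoC mu) w).

Lemma E_idem k : (k < l)%nat -> Meq n (Mmul n (E k) (E k)) (E k).
Proof. intros Hk. destruct HS as (_ & _ & _ & H). apply (H k Hk). Qed.
Lemma E_adj k : (k < l)%nat -> Meq n (Madj (E k)) (E k).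
Proof. intros Hk. destruct HS as (_ & _ & _ & H). apply (H k Hk). Qed.
Lemma E_iff k w : (k < l)%nat -> eigv (lam k) w <-> Veq n (Mvec n (E k) w) w.
Proof. intros Hk. destruct HS as (_ & _ & _ & H). apply (H k Hk). Qed.
Lemma lam_inj j k : (j < l)%nat -> (k < l)%nat -> lam j = lam k -> j = k.
Proof. destruct HS as (H & _). apply H. Qed.

Lemma E_img k v : (k < l)%nat -> eigv (lam k) (Mvec n (E k) v).
Proof. intros Hk. apply E_iff; auto. intros i Hi. rewrite <- Mvec_mul. apply Mvec_Meq; auto.
  apply E_idem; auto. Qed.

Lemma cip_eig_zero j k w u : (j < l)%nat -> (k < l)%nat -> j <> k ->
  eigv (lam k) w -> eigv (lam j) u -> cip n w u = C0.
Proof.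
  intros Hj Hk Hjk Hw Hu.
  pose proof (cip_adj n A w u) as H1.
  rewrite (cip_Veq_l n u _ _ Hw) in H1. rewrite cip_scale_l, Cconj_RtoC in H1.
  rewrite (cip_Veq_r n w (Mvec n (Madj A) u) (Mvec n A u)) in H1.
  rewrite (cip_Veq_r n w _ _ Hu) in H1. rewrite cip_scale_r in H1.
  apply (Cmul_cancel_real (lam k) (lam j)); auto.
  intros He. apply Hjk. symmetry. apply lam_inj; auto.
  intros i Hi. apply Mvec_Meq; auto. apply Meq_sym; auto.
Qed.

Lemma E_orth j k w : (j < l)%nat -> (k < l)%nat -> j <> k -> eigv (lam k) w ->
  Veq n (Mvec n (E j) w) (fun _ => C0).
Proof.
  intros Hj Hk Hjk Hw. set (u := Mvec n (E j) w).
  assert (Hu : eigv (lam j) u) by (apply E_img; auto).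
  assert (Hc : cip n w u = C0) by (apply (cip_eig_zero j k); auto).
  assert (Hfix : Veq n (Mvec n (E j) u) u) by (apply E_iff; auto).
  apply Vnorm_zero. rewrite Vnorm_rp. rewrite <- Re_cip.
  unfold u at 1. rewrite cip_adj.
  rewrite (cip_Veq_r n w _ (Mvec n (E j) u)). rewrite (cip_Veq_r n w _ u Hfix). rewrite Hc.
  unfold C0, RtoC; cbn [Re]. apply sqrt_0.
  intros i Hi. apply Mvec_Meq; auto. apply E_adj; auto.
Qed.

Lemma E_on_eig k k' w : (k < l)%nat -> (k' < l)%nat -> eigv (lam k') w ->
  Veq n (Mvec n (E k) w) (if Nat.eq_dec k k' then w else (fun _ => C0)).
Proof.
  intros Hk Hk' Hw. destruct (Nat.eq_dec k k'). subst. apply E_iff; auto.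
  apply (E_orth k k'); auto.
Qed.

Lemma U_cases (U : nat -> Vec) (d : nat -> Cx) p :
  Veq n (Mvec n A (U p)) (Vscale (d p) (U p)) ->
  Veq n (U p) (fun _ => C0) \/ exists k, (k < l)%nat /\ eigv (lam k) (U p) /\ Vnonzero n (U p).
Proof.
  intros HU. destruct (classic (Vnonzero n (U p))) as [Hnz|Hz].
  - right. destruct HS as (_ & _ & H3 & _). destruct (H3 (d p)) as [k [Hk Hd]].
    exists (U p); split; auto. exists k. rewrite Hd in HU. split; auto.
  - left. intros i Hi. destruct (classic (U p i = C0)); auto. exfalso. apply Hz. exists i; auto.
Qed.

Lemma E_complete v : Veq n (fun i => CLsum (seq 0 l) (fun k => Mvec n (E k) v i)) v.
Proof.
  destruct (Bridge.herm_eigbasis n A HA) as (U & d & HU1 & HU2).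
  destruct (HU2 v) as [c Hc].
  intros i Hi.
  rewrite (CLsum_ext _ _ (fun k => Mvec n (E k) (fun r => Csum n (fun p => Cmul (c p) (U p r))) i)).
  2:{ intros k _. apply Mvec_Veq; auto. }
  rewrite (CLsum_ext _ _ (fun k => Csum n (fun p => Cmul (c p) (Mvec n (E k) (U p) i)))).
  2:{ intros k _. apply Mvec_Csum_v. }
  rewrite <- CLsum_Csum. rewrite (Hc i Hi). apply Csum_ext. intros p Hp.
  rewrite CLsum_scal. f_equal.
  destruct (U_cases U d p (HU1 p Hp)) as [Hz | (k0 & Hk0 & Heig & _)].
  - rewrite (CLsum_ext _ _ (fun _ => C0)). rewrite CLsum_zero. rewrite Hz; auto.
    intros k _. apply Mvec_zero_v; auto.
  - rewrite (CLsum_ext _ _ (fun k => if Nat.eq_dec k0 k then U p i else C0)).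
    apply (CLsum_single Nat.eq_dec (seq 0 l) k0 (fun _ => U p i)). apply seq_NoDup. apply in_seq; lia.
    intros k Hk. apply in_seq in Hk. rewrite (E_on_eig k k0 (U p)); auto; try lia.
    destruct (Nat.eq_dec k k0); destruct (Nat.eq_dec k0 k); auto; lia.
Qed.

Lemma l_le_n : (l <= n)%nat.
Proof.
  destruct (Bridge.herm_eigbasis n A HA) as (U & d & HU1 & HU2).
  assert (Hex : forall k, (k < l)%nat -> exists p, (p < n)%nat /\ eigv (lam k) (U p) /\ Vnonzero n (U p)).
  { intros k Hk. apply NNPP. intros Hno.
    destruct HS as (_ & H2 & _ & _). destruct (H2 k Hk) as [w [Hwnz Hw]].
    assert (Hfix : Veq n (Mvec n (E k) w) w) by (apply E_iff; auto).
    destruct (HU2 w) as [c Hc].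
    assert (Hzero : forall p, (p < n)%nat -> Veq n (Mvec n (E k) (U p)) (fun _ => C0)).
    { intros p Hp. destruct (U_cases U d p (HU1 p Hp)) as [Hz | (k0 & Hk0 & Heig & Hnz)].
      intros i Hi. apply Mvec_zero_v; auto.
      destruct (Nat.eq_dec k k0). subst. exfalso. apply Hno. exists p; auto.
      apply (E_orth k k0); auto. }
    destruct Hwnz as [i [Hi Hwi]]. apply Hwi. rewrite <- (Hfix i Hi).
    rewrite (Mvec_Veq n (E k) w _ i Hc). rewrite Mvec_Csum_v.
    transitivity (Csum n (fun _ => C0)). apply Csum_ext; intros p Hp. rewrite (Hzero p Hp i Hi). ring.
    apply Csum_0. }
  set (f := fun k => epsilon (inhabits O) (fun p => (p < n)%nat /\ eigv (lam k) (U p) /\ Vnonzero n (U p))).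
  assert (Hf : forall k, (k < l)%nat -> (f k < n)%nat /\ eigv (lam k) (U (f k)) /\ Vnonzero n (U (f k))).
  { intros k Hk. unfold f. apply epsilon_spec. apply Hex; auto. }
  assert (Hnd : NoDup (map f (seq 0 l))).
  { apply NoDup_map_NoDup_ForallPairs; [|apply seq_NoDup].
    intros a b Ha Hb Hab. apply in_seq in Ha; apply in_seq in Hb.
    destruct (Hf a ltac:(lia)) as (_ & Ea & [i [Hi Hnz]]). destruct (Hf b ltac:(lia)) as (_ & Eb & _).
    rewrite Hab in Ea. destruct (Nat.eq_dec a b); auto. exfalso.
    pose proof (E_on_eig a a (U (f b)) ltac:(lia) ltac:(lia) Ea i Hi).
    pose proof (E_on_eig a b (U (f b)) ltac:(lia) ltac:(lia) Eb i Hi).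
    destruct (Nat.eq_dec a a); [|lia]. destruct (Nat.eq_dec a b); [lia|].
    apply Hnz. congruence. }
  apply NoDup_incl_length with (l' := seq 0 n) in Hnd.
  rewrite length_map, !length_seq in Hnd; auto.
  intros p Hp. apply in_map_iff in Hp. destruct Hp as [k [<- Hk]]. apply in_seq in Hk.
  apply in_seq. destruct (Hf k ltac:(lia)); lia.
Qed.

Lemma opnorm_E k : (k < l)%nat -> opnorm n (E k) <= 1.
Proof.
  intros Hk. apply opnorm_le_bound. lra. intros v.
  set (u := Mvec n (E k) v).
  assert (H : rp n u u = rp n v u).
  { rewrite <- !Re_cip. unfold u at 1. rewrite cip_adj. f_equal. apply cip_Veq_r.
    intros i Hi. rewrite (Mvec_Meq n _ (E k)); auto. unfold u. rewrite <- Mvec_mul.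
    apply Mvec_Meq; auto. apply E_idem; auto. apply E_adj; auto. }
  pose proof (rp_le_Vnorm n v u). rewrite <- H, <- Vnorm_sq in H0.
  pose proof (Vnorm_nonneg n u). pose proof (Vnorm_nonneg n v). fold u. nra.
Qed.
End Spec.

Section FCalc.
Variables (n : nat) (A : Mat) (l : nat) (lam : nat -> R) (E : nat -> Mat).
Hypothesis HA : hermitian n A.
Hypothesis HS : spectral_data n A l lam E.

Definition F (g : nat -> Cx) : Mat := Msum_list (map (fun k => Mscale (g k) (E k)) (seq 0 l)).

Lemma F_Mvec g v i : Mvec n (F g) v i = CLsum (seq 0 l) (fun k => Cmul (g k) (Mvec n (E k) v i)).
Proof. unfold F. rewrite Mvec_sum_m. apply CLsum_ext; intros. apply Mvec_scale_m. Qed.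

Lemma F_one : Meq n (F (fun _ => C1)) Mid.
Proof. apply Meq_of_Mvec. intros v i Hi. rewrite F_Mvec, Mvec_Mid by auto.
  transitivity (CLsum (seq 0 l) (fun k => Mvec n (E k) v i)). apply CLsum_ext; intros; ring.
  apply (E_complete n A l lam E HA HS v i Hi). Qed.

Lemma EE j k v : (j < l)%nat -> (k < l)%nat ->
  Veq n (Mvec n (E j) (Mvec n (E k) v)) (if Nat.eq_dec j k then Mvec n (E k) v else (fun _ => C0)).
Proof. intros Hj Hk. apply (E_on_eig n A l lam E HA HS); auto. apply (E_img n A l lam E HS); auto. Qed.

Lemma F_mul g h : Meq n (Mmul n (F g) (F h)) (F (fun k => Cmul (g k) (h k))).
Proof.
  apply Meq_of_Mvec. intros v i Hi. rewrite Mvec_mul, !F_Mvec.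
  apply CLsum_ext. intros j Hj. apply in_seq in Hj.
  replace (Mvec n (E j) (Mvec n (F h) v) i) with (Cmul (h j) (Mvec n (E j) v i)); [ring|].
  symmetry. rewrite (Mvec_Veq n (E j) _ (fun r => CLsum (seq 0 l) (fun k => Cmul (h k) (Mvec n (E k) v r)))).
  2:{ intros r Hr. apply F_Mvec. }
  rewrite Mvec_CLsum_v.
  rewrite (CLsum_ext _ _ (fun k => if Nat.eq_dec j k then Cmul (h j) (Mvec n (E j) v i) else C0)).
  rewrite (CLsum_single Nat.eq_dec (seq 0 l) j (fun _ => Cmul (h j) (Mvec n (E j) v i))).
  auto. apply seq_NoDup. apply in_seq; lia.
  intros k Hk. apply in_seq in Hk.
  rewrite (Mvec_Veq n (E j) _ (Vscale (h k) (Mvec n (E k) v))) by (intros r _; reflexivity).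
  rewrite Mvec_scale_v. rewrite (EE j k v) by (auto; lia).
  destruct (Nat.eq_dec j k); subst; auto. ring.
Qed.

Lemma F_Meq g h : (forall k, (k < l)%nat -> g k = h k) -> Meq n (F g) (F h).
Proof. intros H i j Hi Hj. unfold F. rewrite !Msum_list_map_ij. apply CLsum_ext.
  intros k Hk. apply in_seq in Hk. unfold Mscale. rewrite H; auto. lia. Qed.

Lemma A_F : Meq n A (F (fun k => RtoC (lam k))).
Proof.
  apply Meq_of_Mvec. intros v i Hi. rewrite F_Mvec.
  rewrite (Mvec_Veq n A v (fun r => CLsum (seq 0 l) (fun k => Mvec n (E k) v r))).
  2:{ intros r Hr. symmetry. apply (E_complete n A l lam E HA HS v r Hr). }
  rewrite Mvec_CLsum_v. apply CLsum_ext. intros k Hk. apply in_seq in Hk.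
  pose proof (E_img n A l lam E HS k v ltac:(lia)). apply H; auto.
Qed.

Lemma scale_F c g : Meq n (Mscale c (F g)) (F (fun k => Cmul c (g k))).
Proof. intros i j _ _. unfold F, Mscale at 1. rewrite !Msum_list_map_ij, <- CLsum_scal.
  apply CLsum_ext; intros. unfold Mscale. ring. Qed.

Lemma pow_F c m : Meq n (Mpow n (Mscale c A) m) (F (fun k => Cpow (Cmul c (RtoC (lam k))) m)).
Proof.
  induction m.
  - simpl. apply Meq_sym. apply F_one.
  - simpl. eapply Meq_trans. apply Mmul_Meq. apply IHm.
    2:{ eapply Meq_trans. 2:{ apply F_mul. } apply Meq_refl. }
    eapply Meq_trans. 2: apply scale_F. intros i j Hi Hj. unfold Mscale. rewrite A_F; auto.
Qed.
End FCalc.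

Definition eC (x : Cx) (p : nat) : Cx := Cmul (RtoC (/ INR (fact p))) (Cpow x p).
Definition conv k (f g : nat -> Cx) := Csum (S k) (fun p => Cmul (f p) (g (k - p)%nat)).

Lemma INR_fact_neq0 p : INR (fact p) <> 0.
Proof. apply not_0_INR, fact_neq_0. Qed.

Lemma Cmul_INR0 z : Cmul (RtoC (INR 0)) z = C0.
Proof. simpl INR. rewrite RtoC_0. ring. Qed.

Lemma eC_S x p : Cmul x (eC x p) = Cmul (RtoC (INR (S p))) (eC x (S p)).
Proof.
  unfold eC. cbn [Cpow]. rewrite fact_simpl, mult_INR.
  pose proof (INR_fact_neq0 p). pose proof (S_INR p). pose proof (pos_INR p).
  apply Cx_ext; unfold Cmul, RtoC; cbn [Re Im]; field; lra.
Qed.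

Lemma conv_x x y k : Cmul x (conv k (eC x) (eC y)) =
  Csum (S (S k)) (fun p => Cmul (RtoC (INR p)) (Cmul (eC x p) (eC y (S k - p)%nat))).
Proof.
  rewrite Csum_S_l. unfold conv. rewrite Csum_scal_l.
  rewrite Cmul_INR0.
  rewrite (Csum_ext _ _ (fun p => Cmul (RtoC (INR (S p))) (Cmul (eC x (S p)) (eC y (S k - S p)%nat)))).
  ring. intros p Hp. simpl (S k - S p)%nat.
  transitivity (Cmul (Cmul x (eC x p)) (eC y (k - p)%nat)). ring. rewrite eC_S. ring.
Qed.

Lemma conv_y x y k : Cmul y (conv k (eC x) (eC y)) =
  Csum (S (S k)) (fun p => Cmul (RtoC (INR (S k - p))) (Cmul (eC x p) (eC y (S k - p)%nat))).
Proof.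
  change (Csum (S (S k)) ?f) with (Cadd (Csum (S k) f) (f (S k))).
  cbv beta. rewrite Nat.sub_diag.
  rewrite Cmul_INR0.
  unfold conv. rewrite Csum_scal_l.
  rewrite (Csum_ext (S k) _ (fun p => Cmul (RtoC (INR (S (k - p)))) (Cmul (eC x p) (eC y (S (k - p)))))).
  rewrite (Csum_ext (S k) (fun p => Cmul (RtoC (INR (S k - p))) (Cmul (eC x p) (eC y (S k - p)%nat)))
    (fun p => Cmul (RtoC (INR (S (k - p)))) (Cmul (eC x p) (eC y (S (k - p)))))).
  ring.
  intros p Hp. replace (S k - p)%nat with (S (k - p)) by lia. auto.
  intros p Hp.
  transitivity (Cmul (eC x p) (Cmul y (eC y (k - p)%nat))). ring. rewrite eC_S. ring.
Qed.

Lemma eC_add x y k : eC (Cadd x y) k = conv k (eC x) (eC y).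
Proof.
  induction k.
  - unfold conv, eC. simpl. apply Cx_ext; unfold Cmul, Cadd, RtoC, C0, C1; cbn [Re Im]; unfold RtoC; cbn [Re Im]; field.
  - assert (H : Cmul (RtoC (INR (S k))) (eC (Cadd x y) (S k)) = Cmul (RtoC (INR (S k))) (conv (S k) (eC x) (eC y))).
    { rewrite <- eC_S. rewrite IHk.
      replace (Cmul (Cadd x y) (conv k (eC x) (eC y))) with
        (Cadd (Cmul x (conv k (eC x) (eC y))) (Cmul y (conv k (eC x) (eC y)))) by ring.
      rewrite conv_x, conv_y, <- Csum_add. unfold conv. rewrite Csum_scal_l.
      apply Csum_ext. intros p Hp.
      replace (INR (S k)) with (INR p + INR (S k - p)) by (rewrite <- plus_INR; f_equal; lia).
      rewrite RtoC_add. ring. }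
    pose proof (S_INR k). pose proof (pos_INR k).
    assert (G1 := f_equal Re H). assert (G2 := f_equal Im H).
    unfold Cmul, RtoC in G1, G2; cbn [Re Im] in G1, G2.
    apply Cx_ext.
    + apply Rmult_eq_reg_l with (INR (S k)); [|lra]. lra.
    + apply Rmult_eq_reg_l with (INR (S k)); [|lra]. lra.
Qed.

Lemma Un_cv_ext_from (u v : nat -> R) l : (forall N, (N >= 1)%nat -> u N = v N) -> Un_cv v l -> Un_cv u l.
Proof. intros H Hv eps He. destruct (Hv eps He) as [N HN]. exists (S N). intros m Hm.
  rewrite H by lia. apply HN; lia. Qed.
Lemma Un_cv_ext (u v : nat -> R) l : (forall N, u N = v N) -> Un_cv v l -> Un_cv u l.
Proof. intros H. apply Un_cv_ext_from. intros; auto. Qed.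
Lemma Un_cv_squeeze0 (u w : nat -> R) : (forall N, (N >= 1)%nat -> Rabs (u N) <= w N) -> Un_cv w 0 -> Un_cv u 0.
Proof. intros H Hw eps He. destruct (Hw eps He) as [N HN]. exists (S N). intros m Hm.
  specialize (HN m ltac:(lia)). specialize (H m ltac:(lia)). unfold Rdist in *.
  rewrite Rminus_0_r in *. apply Rle_lt_trans with (w m); auto.
  eapply Rle_lt_trans; [apply Rle_abs|exact HN]. Qed.
Lemma Un_cv_shift (u : nat -> R) l : Un_cv (fun m => u (S m)) l -> Un_cv u l.
Proof. intros H eps He. destruct (H eps He) as [N HN]. exists (S N). intros m Hm.
  destruct m. lia. apply HN; lia. Qed.
Lemma cv_even_odd (u T : nat -> R) L : Un_cv T L -> (forall k, u (2*k)%nat = T k) -> (forall k, u (2*k+1)%nat = T k) -> Un_cv u L.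
Proof.
  intros HT He Ho eps Heps. destruct (HT eps Heps) as [N HN]. exists (2*N)%nat. intros m Hm.
  destruct (Nat.Even_or_Odd m) as [[k ->]|[k ->]].
  rewrite He. apply HN; lia. rewrite Ho. apply HN; lia.
Qed.

Lemma exp_cv x : Un_cv (sum_f_R0 (fun i => / INR (fact i) * x ^ i)) (exp x).
Proof. unfold exp. destruct (exist_exp x) as [l Hl]. simpl. exact Hl. Qed.

Lemma cauchy_prod_cv An Bn Aa Bb LA LB :
  (forall p, Rabs (An p) <= Aa p) -> (forall q, Rabs (Bn q) <= Bb q) ->
  Un_cv (sum_f_R0 An) LA -> Un_cv (sum_f_R0 Bn) LB ->
  Un_cv (fun N => sum_f_R0 Aa N * sum_f_R0 Bb N - sum_f_R0 (fun k => sum_f_R0 (fun p => Aa p * Bb (k-p)%nat) k) N) 0 ->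
  Un_cv (fun N => sum_f_R0 (fun k => sum_f_R0 (fun p => An p * Bn (k - p)%nat) k) N) (LA * LB).
Proof.
  intros HA HB CA CB CR.
  set (Rm := fun (A B : nat -> R) N => sum_f_R0 (fun k => sum_f_R0 (fun l => A (S (l + k)) * B (N - l)%nat) (Init.Nat.pred (N - k))) (Init.Nat.pred N)).
  assert (Hrem : Un_cv (Rm An Bn) 0).
  { apply (Un_cv_squeeze0 _ (fun N => sum_f_R0 Aa N * sum_f_R0 Bb N - sum_f_R0 (fun k => sum_f_R0 (fun p => Aa p * Bb (k-p)%nat) k) N)); auto.
    intros N HN. rewrite (cauchy_finite Aa Bb N) by lia.
    replace (sum_f_R0 (fun k => sum_f_R0 (fun p => Aa p * Bb (k - p)%nat) k) N + _ - sum_f_R0 (fun k => sum_f_R0 (fun p => Aa p * Bb (k - p)%nat) k) N) with (Rm Aa Bb N) by (unfold Rm; ring).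
    unfold Rm. eapply Rle_trans. apply Rsum_abs. apply sum_Rle. intros k Hk.
    eapply Rle_trans. apply Rsum_abs. apply sum_Rle. intros p Hp.
    rewrite Rabs_mult. apply Rmult_le_compat; try apply Rabs_pos; auto. }
  apply (Un_cv_ext_from _ (fun N => sum_f_R0 An N * sum_f_R0 Bn N - Rm An Bn N)).
  intros N HN. rewrite (cauchy_finite An Bn N) by lia. unfold Rm. ring.
  replace (LA * LB) with (LA * LB - 0) by ring. apply CV_minus; auto. apply CV_mult; auto.
Qed.

Lemma Cpow_RtoC a p : Cpow (RtoC a) p = RtoC (a ^ p).
Proof. induction p; simpl. reflexivity. rewrite IHp, <- RtoC_mul. f_equal; ring. Qed.
Lemma eC_real a p : eC (RtoC a) p = RtoC (/ INR (fact p) * a ^ p).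
Proof. unfold eC. rewrite Cpow_RtoC, <- RtoC_mul. auto. Qed.
Lemma Re_conv_real a g k : Re (conv k (eC (RtoC a)) g) =
  sum_f_R0 (fun p => (/ INR (fact p) * a ^ p) * Re (g (k - p)%nat)) k.
Proof. unfold conv. rewrite Re_Csum, Rsum_sum_f. apply sum_eq. intros p _.
  rewrite eC_real. unfold Cmul, RtoC; cbn [Re Im]. ring. Qed.
Lemma Im_conv_real a g k : Im (conv k (eC (RtoC a)) g) =
  sum_f_R0 (fun p => (/ INR (fact p) * a ^ p) * Im (g (k - p)%nat)) k.
Proof. unfold conv. rewrite Im_Csum, Rsum_sum_f. apply sum_eq. intros p _.
  rewrite eC_real. unfold Cmul, RtoC; cbn [Re Im]. ring. Qed.

Lemma exp_prod_rem (al be : R) :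
  Un_cv (fun N => sum_f_R0 (fun p => / INR (fact p) * al ^ p) N * sum_f_R0 (fun q => / INR (fact q) * be ^ q) N -
     sum_f_R0 (fun k => sum_f_R0 (fun p => (/ INR (fact p) * al ^ p) * (/ INR (fact (k - p)) * be ^ (k-p))) k) N) 0.
Proof.
  replace 0 with (exp al * exp be - exp (al + be)) by (rewrite exp_plus; ring).
  apply CV_minus. apply CV_mult; apply exp_cv.
  apply (Un_cv_ext _ (sum_f_R0 (fun i => / INR (fact i) * (al + be) ^ i))); [|apply exp_cv].
  intros N. apply sum_eq. intros k _.
  pose proof (eC_add (RtoC al) (RtoC be) k) as H. rewrite <- RtoC_add, eC_real in H.
  apply (f_equal Re) in H. rewrite Re_conv_real in H. cbn [Re RtoC] in H. rewrite H.
  apply sum_eq. intros p _. rewrite eC_real. reflexivity.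
Qed.

Section Trig.
Variable b : R.
Let y := mkC 0 b.

Lemma Cpow_iy j : Cpow y (2*j) = RtoC ((-1)^j * b^(2*j)) /\ Cpow y (2*j+1) = mkC 0 ((-1)^j * b^(2*j+1)).
Proof.
  induction j.
  - simpl. split. apply Cx_ext; unfold C1, RtoC; cbn [Re Im]; ring. apply Cx_ext; unfold Cmul, C1, RtoC, y; cbn [Re Im]; ring.
  - destruct IHj as [He Ho].
    assert (He' : Cpow y (2 * S j) = RtoC ((-1)^(S j) * b^(2 * S j))).
    { replace (2 * S j)%nat with (S (2*j+1)) by lia. cbn [Cpow]. rewrite Ho.
      replace (S (2*j+1)) with (2*j+1+1)%nat by lia.
      apply Cx_ext; unfold Cmul, RtoC, y; cbn [Re Im]. rewrite !pow_add. simpl. ring. ring. }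
    split; auto. replace (2 * S j + 1)%nat with (S (2 * S j)) by lia. cbn [Cpow]. rewrite He'.
    apply Cx_ext; unfold Cmul, RtoC, y; cbn [Re Im]. ring.
    replace (S (2 * S j)) with (2 * S j + 1)%nat by lia. rewrite pow_add. simpl. ring.
Qed.

Lemma b2j j : b ^ (2 * j) = (Rsqr b) ^ j.
Proof. rewrite pow_mult. unfold Rsqr. f_equal. ring. Qed.

Definition Bre q := Re (eC y q).
Definition Bim q := Im (eC y q).

Lemma Bre_even j : Bre (2*j) = cos_n j * (Rsqr b)^j.
Proof. unfold Bre, eC. rewrite (proj1 (Cpow_iy j)). unfold Cmul, RtoC; cbn [Re Im]. unfold cos_n. rewrite b2j. field. apply INR_fact_neq0. Qed.
Lemma Bre_odd j : Bre (2*j+1) = 0.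
Proof. unfold Bre, eC. rewrite (proj2 (Cpow_iy j)). unfold Cmul, RtoC; cbn [Re Im]. ring. Qed.
Lemma Bim_even j : Bim (2*j) = 0.
Proof. unfold Bim, eC. rewrite (proj1 (Cpow_iy j)). unfold Cmul, RtoC; cbn [Re Im]. ring. Qed.
Lemma Bim_odd j : Bim (2*j+1) = b * (sin_n j * (Rsqr b)^j).
Proof. unfold Bim, eC. rewrite (proj2 (Cpow_iy j)). unfold Cmul, RtoC; cbn [Re Im]. unfold sin_n.
  rewrite pow_add, b2j. field. apply INR_fact_neq0. Qed.

Lemma sre k : sum_f_R0 Bre (2*k) = sum_f_R0 (fun j => cos_n j * (Rsqr b)^j) k /\
              sum_f_R0 Bre (2*k+1) = sum_f_R0 (fun j => cos_n j * (Rsqr b)^j) k.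
Proof.
  induction k.
  - simpl sum_f_R0. pose proof (Bre_even 0). pose proof (Bre_odd 0). simpl in *. split; lra.
  - destruct IHk as [He Ho].
    assert (He' : sum_f_R0 Bre (2 * S k) = sum_f_R0 (fun j => cos_n j * (Rsqr b)^j) (S k)).
    { replace (2 * S k)%nat with (S (2*k+1)) by lia. rewrite tech5, Ho, tech5.
      replace (S (2*k+1)) with (2 * S k)%nat by lia. rewrite Bre_even. auto. }
    split; auto. replace (2 * S k + 1)%nat with (S (2 * S k)) by lia. rewrite tech5, He'.
    replace (S (2 * S k)) with (2 * S k + 1)%nat by lia. rewrite Bre_odd. ring.
Qed.
Lemma sim k : sum_f_R0 Bim (2*k+1) = b * sum_f_R0 (fun j => sin_n j * (Rsqr b)^j) k /\
              sum_f_R0 Bim (2*k+2) = b * sum_f_R0 (fun j => sin_n j * (Rsqr b)^j) k.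
Proof.
  induction k.
  - simpl sum_f_R0. pose proof (Bim_even 0). pose proof (Bim_odd 0). pose proof (Bim_even 1). simpl in *. split; lra.
  - destruct IHk as [Ho He].
    assert (Ho' : sum_f_R0 Bim (2 * S k + 1) = b * sum_f_R0 (fun j => sin_n j * (Rsqr b)^j) (S k)).
    { replace (2 * S k + 1)%nat with (S (2*k+2)) by lia. rewrite tech5, He, tech5.
      replace (S (2*k+2)) with (2 * S k + 1)%nat by lia. rewrite Bim_odd. ring. }
    split; auto. replace (2 * S k + 2)%nat with (S (2 * S k + 1)) by lia. rewrite tech5, Ho'.
    replace (S (2 * S k + 1)) with (2 * (S (S k)))%nat by lia. rewrite Bim_even. ring.
Qed.

Lemma cos_cv : Un_cv (sum_f_R0 Bre) (cos b).
Proof.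
  unfold cos. destruct (exist_cos (Rsqr b)) as [l Hl].
  apply (cv_even_odd _ (sum_f_R0 (fun j => cos_n j * (Rsqr b)^j))). exact Hl.
  intros k; apply sre. intros k; apply sre.
Qed.
Lemma sin_cv : Un_cv (sum_f_R0 Bim) (sin b).
Proof.
  unfold sin. destruct (exist_sin (Rsqr b)) as [l Hl].
  apply Un_cv_shift. apply (cv_even_odd _ (fun k => b * sum_f_R0 (fun j => sin_n j * (Rsqr b)^j) k)).
  apply (Un_cv_ext _ (fun k => (fun _ => b) k * sum_f_R0 (fun j => sin_n j * (Rsqr b)^j) k)). intros; auto.
  apply CV_mult. intros eps He. exists O. intros. unfold Rdist. rewrite Rminus_eq_0, Rabs_R0. auto. exact Hl.
  intros k. replace (S (2*k)) with (2*k+1)%nat by lia. apply sim.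
  intros k. replace (S (2*k+1)) with (2*k+2)%nat by lia. apply sim.
Qed.

Lemma Cmod_eC_y q : Cmod (eC y q) = / INR (fact q) * Rabs b ^ q.
Proof.
  unfold eC. rewrite Cmod_mul, Cmod_RtoC. rewrite Rabs_pos_eq.
  f_equal. induction q. simpl. unfold Cmod, C1, RtoC; cbn [Re Im]. replace (1^2+0^2) with 1 by ring. apply sqrt_1.
  simpl. rewrite Cmod_mul, IHq. unfold Cmod, y; cbn [Re Im]. replace (0^2+b^2) with (b*b) by ring.
  rewrite <- (sqrt_Rsqr_abs b). unfold Rsqr. ring.
  apply Rlt_le, Rinv_0_lt_compat, lt_0_INR, lt_O_fact.
Qed.
End Trig.

Theorem Cexp_series z : Un_cv (fun m => Re (Csum (S m) (eC z))) (Re (Cexp z)) /\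
                        Un_cv (fun m => Im (Csum (S m) (eC z))) (Im (Cexp z)).
Proof.
  set (a := Re z). set (b := Im z).
  assert (Hz : z = Cadd (RtoC a) (mkC 0 b)) by (apply Cx_ext; unfold Cadd, RtoC, a, b; cbn [Re Im]; ring).
  assert (HA : forall p, Rabs (/ INR (fact p) * a ^ p) <= / INR (fact p) * Rabs a ^ p).
  { intros p. rewrite Rabs_mult, <- RPow_abs, Rabs_pos_eq. lra. apply Rlt_le, Rinv_0_lt_compat, lt_0_INR, lt_O_fact. }
  unfold Cexp. cbn [Re Im]. fold a b.
  split.
  - apply (Un_cv_ext _ (fun N => sum_f_R0 (fun k => sum_f_R0 (fun p => (/ INR (fact p) * a ^ p) * Bre b (k - p)%nat) k) N)).
    { intros N. rewrite Re_Csum, Rsum_sum_f. apply sum_eq. intros k _. rewrite Hz, eC_add, Re_conv_real. reflexivity. }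
    apply (cauchy_prod_cv _ _ (fun p => / INR (fact p) * Rabs a ^ p) (fun q => / INR (fact q) * Rabs b ^ q)); auto.
    intros q. rewrite <- Cmod_eC_y. apply Re_le_Cmod. apply exp_cv. apply cos_cv. apply exp_prod_rem.
  - apply (Un_cv_ext _ (fun N => sum_f_R0 (fun k => sum_f_R0 (fun p => (/ INR (fact p) * a ^ p) * Bim b (k - p)%nat) k) N)).
    { intros N. rewrite Im_Csum, Rsum_sum_f. apply sum_eq. intros k _. rewrite Hz, eC_add, Im_conv_real. reflexivity. }
    apply (cauchy_prod_cv _ _ (fun p => / INR (fact p) * Rabs a ^ p) (fun q => / INR (fact q) * Rabs b ^ q)); auto.
    intros q. rewrite <- Cmod_eC_y. apply Im_le_Cmod. apply exp_cv. apply sin_cv. apply exp_prod_rem.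
Qed.

Lemma Cexp_add z w : Cexp (Cadd z w) = Cmul (Cexp z) (Cexp w).
Proof. apply Cx_ext; unfold Cexp, Cadd, Cmul; cbn [Re Im]; rewrite exp_plus, ?cos_plus, ?sin_plus; ring. Qed.
Lemma Cexp_0 : Cexp C0 = C1.
Proof. apply Cx_ext; unfold Cexp, C0, C1, RtoC; cbn [Re Im]; rewrite exp_0, ?cos_0, ?sin_0; ring. Qed.

Definition Ccv (s : nat -> Cx) (z : Cx) := Un_cv (fun m => Re (s m)) (Re z) /\ Un_cv (fun m => Im (s m)) (Im z).

Lemma cv_const c : Un_cv (fun _ => c) c.
Proof. intros eps He. exists O. intros. unfold Rdist. rewrite Rminus_diag, Rabs_R0. auto. Qed.
Lemma Ccv_ext s t z : (forall m, s m = t m) -> Ccv t z -> Ccv s z.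
Proof. intros H [H1 H2]. split; eapply Un_cv_ext; eauto; intros; simpl; rewrite H; auto. Qed.
Lemma Ccv_add s t z w : Ccv s z -> Ccv t w -> Ccv (fun m => Cadd (s m) (t m)) (Cadd z w).
Proof. intros [H1 H2] [H3 H4]. split; simpl; apply CV_plus; auto. Qed.
Lemma Ccv_const z : Ccv (fun _ => z) z.
Proof. split; apply cv_const. Qed.
Lemma Ccv_mul_r s z w : Ccv s z -> Ccv (fun m => Cmul (s m) w) (Cmul z w).
Proof. intros [H1 H2]. split; simpl.
  apply CV_minus; apply CV_mult; auto; apply cv_const.
  apply CV_plus; apply CV_mult; auto; apply cv_const. Qed.
Lemma Ccv_CLsum {X} (xs : list X) (f : nat -> X -> Cx) g :
  (forall x, In x xs -> Ccv (fun m => f m x) (g x)) -> Ccv (fun m => CLsum xs (f m)) (CLsum xs g).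
Proof. induction xs; intros H. apply (Ccv_ext _ (fun _ => C0)). intros; auto. apply Ccv_const.
  rewrite CLsum_cons. apply (Ccv_ext _ (fun m => Cadd (f m a) (CLsum xs (f m)))).
  intros; apply CLsum_cons. apply Ccv_add. apply H; simpl; auto. apply IHxs. intros; apply H; simpl; auto. Qed.
Lemma Ccv_Csum k (f : nat -> nat -> Cx) g :
  (forall x, (x < k)%nat -> Ccv (fun m => f m x) (g x)) -> Ccv (fun m => Csum k (f m)) (Csum k g).
Proof. induction k; intros H. simpl. apply Ccv_const. simpl. apply Ccv_add. apply IHk; intros; apply H; lia. apply H; lia. Qed.
Lemma Ccv_unique s z w : Ccv s z -> Ccv s w -> z = w.
Proof. intros [H1 H2] [H3 H4]. apply Cx_ext; eapply UL_sequence; eauto. Qed.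

Definition psum n M m i j := Csum (S m) (fun k => Cmul (RtoC (/ INR (fact k))) (Mpow n M k i j)).

Lemma is_Mexp_Ccv n M X : is_Mexp n M X <-> (forall i j, (i < n)%nat -> (j < n)%nat -> Ccv (fun m => psum n M m i j) (X i j)).
Proof. unfold is_Mexp, Ccv, psum. split; intros H i j Hi Hj; apply H; auto. Qed.

Lemma Mexp_spec n M X : is_Mexp n M X -> Meq n (Mexp n M) X.
Proof.
  intros H. assert (H' : is_Mexp n M (Mexp n M)) by (unfold Mexp; apply epsilon_spec; exists X; auto).
  rewrite is_Mexp_Ccv in H, H'. intros i j Hi Hj. eapply Ccv_unique; eauto.
Qed.

Lemma Mexp_herm n A l lam E c : hermitian n A -> spectral_data n A l lam E ->
  Meq n (Mexp n (Mscale c A)) (F l E (fun k => Cexp (Cmul c (RtoC (lam k))))).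
Proof.
  intros HA HS. apply Mexp_spec. apply is_Mexp_Ccv. intros i j Hi Hj.
  apply (Ccv_ext _ (fun m => CLsum (seq 0 l) (fun k => Cmul (Csum (S m) (eC (Cmul c (RtoC (lam k))))) (E k i j)))).
  - intros m. unfold psum.
    rewrite (Csum_ext _ _ (fun p => Cmul (RtoC (/ INR (fact p))) (F l E (fun k => Cpow (Cmul c (RtoC (lam k))) p) i j))).
    2:{ intros p _. rewrite (pow_F n A l lam E HA HS c p i j Hi Hj). auto. }
    unfold F. rewrite (Csum_ext _ _ (fun p => CLsum (seq 0 l) (fun k => Cmul (eC (Cmul c (RtoC (lam k))) p) (E k i j)))).
    rewrite CLsum_Csum. apply CLsum_ext. intros k _. rewrite Csum_scal_r. auto.
    intros p _. rewrite Msum_list_map_ij, <- CLsum_scal. apply CLsum_ext. intros k _. unfold Mscale, eC. ring.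
  - unfold F. rewrite Msum_list_map_ij. apply Ccv_CLsum. intros k _. unfold Mscale.
    apply Ccv_mul_r. apply Cexp_series.
Qed.

Lemma Mpow_norm n M k : opnorm n (Mpow n M k) <= opnorm n M ^ k.
Proof. induction k; simpl. apply opnorm_Mid. eapply Rle_trans. apply opnorm_mul.
  pose proof (opnorm_nonneg n M). pose proof (opnorm_nonneg n (Mpow n M k)). rewrite Rmult_comm. 
  apply Rmult_le_compat_l; auto. Qed.

Definition Eb b k := / INR (fact k) * b ^ k.
Lemma Eb_nonneg b k : 0 <= b -> 0 <= Eb b k.
Proof. intros. unfold Eb. apply Rmult_le_pos. apply Rlt_le, Rinv_0_lt_compat, lt_0_INR, lt_O_fact. apply pow_le; auto. Qed.

Lemma term_bound n M k i j : (i < n)%nat -> (j < n)%nat ->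
  Cmod (Cmul (RtoC (/ INR (fact k))) (Mpow n M k i j)) <= Eb (opnorm n M) k.
Proof.
  intros Hi Hj. rewrite Cmod_mul, Cmod_RtoC, Rabs_pos_eq. unfold Eb. apply Rmult_le_compat_l.
  apply Rlt_le, Rinv_0_lt_compat, lt_0_INR, lt_O_fact.
  apply Rle_trans with (opnorm n (Mpow n M k)). apply Cmod_entry_le; auto. apply Mpow_norm.
  apply Rlt_le, Rinv_0_lt_compat, lt_0_INR, lt_O_fact.
Qed.

Lemma psum_diff n M m d i j : (i < n)%nat -> (j < n)%nat ->
  Cmod (Csub (psum n M (m + d) i j) (psum n M m i j)) <=
  sum_f_R0 (Eb (opnorm n M)) (m + d) - sum_f_R0 (Eb (opnorm n M)) m.
Proof.
  intros Hi Hj. induction d.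
  - rewrite Nat.add_0_r. replace (Csub (psum n M m i j) (psum n M m i j)) with C0 by ring.
    rewrite Cmod_C0. lra.
  - replace (m + S d)%nat with (S (m + d)) by lia. rewrite tech5.
    unfold psum at 1. change (Csum (S (S (m+d))) ?f) with (Cadd (Csum (S (m+d)) f) (f (S (m+d)))).
    cbv beta. fold (psum n M (m + d) i j).
    replace (Csub (Cadd (psum n M (m + d) i j) (Cmul (RtoC (/ INR (fact (S (m + d))))) (Mpow n M (S (m + d)) i j))) (psum n M m i j))
      with (Cadd (Csub (psum n M (m + d) i j) (psum n M m i j)) (Cmul (RtoC (/ INR (fact (S (m + d))))) (Mpow n M (S (m + d)) i j))) by ring.
    eapply Rle_trans. apply Cmod_add. pose proof (term_bound n M (S (m + d)) i j Hi Hj). lra.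
Qed.

Lemma cauchy_dom (u w : nat -> R) : (forall m d, Rabs (u (m+d)%nat - u m) <= Rabs (w (m+d)%nat - w m)) ->
  Cauchy_crit w -> Cauchy_crit u.
Proof.
  intros H Hw eps He. destruct (Hw eps He) as [N HN]. exists N. intros a b Ha Hb. unfold Rdist.
  destruct (le_lt_dec b a).
  - replace a with (b + (a - b))%nat by lia. eapply Rle_lt_trans. apply H.
    replace (b + (a - b))%nat with a by lia. apply HN; auto.
  - rewrite Rabs_minus_sym. replace b with (a + (b - a))%nat by lia. eapply Rle_lt_trans. apply H.
    replace (a + (b - a))%nat with b by lia. rewrite Rabs_minus_sym. apply HN; auto.
Qed.

Lemma psum_cauchy_re n M i j : (i < n)%nat -> (j < n)%nat -> Cauchy_crit (fun m => Re (psum n M m i j)).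
Proof.
  intros Hi Hj. apply (cauchy_dom _ (sum_f_R0 (Eb (opnorm n M)))).
  intros m d. pose proof (psum_diff n M m d i j Hi Hj).
  assert (E1 : Re (psum n M (m + d) i j) - Re (psum n M m i j) = Re (Csub (psum n M (m + d) i j) (psum n M m i j)))
    by (unfold Csub, Cadd, Copp; cbn [Re Im]; ring).
  rewrite E1. eapply Rle_trans. apply Re_le_Cmod. eapply Rle_trans. apply H. apply Rle_abs.
  apply CV_Cauchy. exists (exp (opnorm n M)). apply exp_cv.
Qed.
Lemma psum_cauchy_im n M i j : (i < n)%nat -> (j < n)%nat -> Cauchy_crit (fun m => Im (psum n M m i j)).
Proof.
  intros Hi Hj. apply (cauchy_dom _ (sum_f_R0 (Eb (opnorm n M)))).
  intros m d. pose proof (psum_diff n M m d i j Hi Hj).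
  assert (E1 : Im (psum n M (m + d) i j) - Im (psum n M m i j) = Im (Csub (psum n M (m + d) i j) (psum n M m i j)))
    by (unfold Csub, Cadd, Copp; cbn [Re Im]; ring).
  rewrite E1. eapply Rle_trans. apply Im_le_Cmod. eapply Rle_trans. apply H. apply Rle_abs.
  apply CV_Cauchy. exists (exp (opnorm n M)). apply exp_cv.
Qed.

Lemma Mexp_exists n M : is_Mexp n M (Mexp n M).
Proof.
  unfold Mexp. apply epsilon_spec.
  exists (fun i j => mkC (epsilon (inhabits 0) (Un_cv (fun m => Re (psum n M m i j))))
                        (epsilon (inhabits 0) (Un_cv (fun m => Im (psum n M m i j))))).
  apply is_Mexp_Ccv. intros i j Hi Hj. split; cbn [Re Im]; apply epsilon_spec.
  destruct (R_complete _ (psum_cauchy_re n M i j Hi Hj)) as [x Hx]. exists x; auto.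
  destruct (R_complete _ (psum_cauchy_im n M i j Hi Hj)) as [x Hx]. exists x; auto.
Qed.

Lemma opnorm_Csum n m (c : nat -> Cx) (G : nat -> Mat) :
  opnorm n (fun i j => Csum m (fun k => Cmul (c k) (G k i j))) <= Rsum m (fun k => Cmod (c k) * opnorm n (G k)).
Proof.
  induction m.
  - simpl. rewrite opnorm_zero. lra. intros i j _ _. reflexivity.
  - change (fun i j => Csum (S m) (fun k => Cmul (c k) (G k i j))) with
      (Madd (fun i j => Csum m (fun k => Cmul (c k) (G k i j))) (Mscale (c m) (G m))).
    eapply Rle_trans. apply opnorm_add. simpl. pose proof (opnorm_scale n (c m) (G m)). lra.
Qed.

Lemma Rsum_cv k (f : nat -> nat -> R) g :
  (forall x, (x < k)%nat -> Un_cv (fun m => f m x) (g x)) -> Un_cv (fun m => Rsum k (f m)) (Rsum k g).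
Proof. induction k; intros H. simpl. apply cv_const. simpl. apply CV_plus. apply IHk; intros; apply H; lia. apply H; lia. Qed.

Lemma Vnorm_cv n (w : nat -> Vec) u : (forall i, (i < n)%nat -> Ccv (fun m => w m i) (u i)) ->
  Un_cv (fun m => Vnorm n (w m)) (Vnorm n u).
Proof.
  intros H. apply (Un_cv_ext _ (fun m => sqrt (rp n (w m) (w m)))). intros; apply Vnorm_rp.
  rewrite Vnorm_rp. apply continuity_seq. apply continuity_pt_sqrt, rp_nonneg.
  unfold rp. apply Rsum_cv. intros x Hx. destruct (H x Hx) as [H1 H2].
  apply CV_plus; apply CV_mult; auto.
Qed.

Definition MsubI (X : Mat) : Mat := fun i j => Csub (X i j) (Mid i j).

Lemma Mexp_I_bound n M : opnorm n (MsubI (Mexp n M)) <= exp (opnorm n M) - 1.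
Proof.
  set (b := opnorm n M).
  assert (Hb : 0 <= b) by apply opnorm_nonneg.
  pose proof (Mexp_exists n M) as HX. rewrite is_Mexp_Ccv in HX.
  assert (HS : forall m, opnorm n (MsubI (fun i j => psum n M m i j)) <= exp b - 1).
  { intros m. unfold MsubI.
    apply Rle_trans with (opnorm n (fun i j => Csum m (fun k => Cmul (RtoC (/ INR (fact (S k)))) (Mpow n M (S k) i j)))).
    - apply opnorm_Meq. intros i j _ _. unfold psum. rewrite Csum_S_l. simpl fact. simpl Mpow.
      replace (/ INR 1) with 1 by (simpl; field). rewrite RtoC_1.
      unfold Csub, Copp, Cadd, Cmul; apply Cx_ext; cbn [Re Im]; unfold C1, RtoC; cbn [Re Im]; ring.
    - eapply Rle_trans. apply opnorm_Csum.
      apply Rle_trans with (Rsum m (fun k => Eb b (S k))).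
      + apply Rsum_le. intros k _. rewrite Cmod_RtoC, Rabs_pos_eq. unfold Eb. apply Rmult_le_compat_l.
        apply Rlt_le, Rinv_0_lt_compat, lt_0_INR, lt_O_fact. apply Mpow_norm.
        apply Rlt_le, Rinv_0_lt_compat, lt_0_INR, lt_O_fact.
      + assert (Rsum m (fun k => Eb b (S k)) = sum_f_R0 (Eb b) m - 1).
        { clear HX. induction m. simpl. unfold Eb. simpl. field.
          cbn [Rsum]. rewrite IHm, tech5. ring. }
        rewrite H. pose proof (sum_incr (Eb b) m (exp b) (exp_cv b) (fun k => Eb_nonneg b k Hb)). lra. }
  apply opnorm_le. intros v Hv.
  assert (Hcv : Un_cv (fun m => Vnorm n (Mvec n (MsubI (fun i j => psum n M m i j)) v)) (Vnorm n (Mvec n (MsubI (Mexp n M)) v))).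
  { apply Vnorm_cv. intros i Hi. unfold Mvec. apply Ccv_Csum. intros j Hj. apply Ccv_mul_r.
    unfold MsubI, Csub. apply Ccv_add. apply HX; auto. apply Ccv_const. }
  refine (Rle_cv_lim _ Hcv (cv_const (exp b - 1))).
  intros m. eapply Rle_trans. apply opnorm_bound. pose proof (HS m).
  pose proof (opnorm_nonneg n (MsubI (fun i j => psum n M m i j))). pose proof (Vnorm_nonneg n v).
  apply Rle_trans with (opnorm n (MsubI (fun i j => psum n M m i j)) * 1). apply Rmult_le_compat_l; auto. lra.
Qed.

Definition Lsum {X} (xs : list X) (g : X -> R) : R := fold_right Rplus 0 (map g xs).
Lemma Lsum_cons {X} x xs (g : X -> R) : Lsum (x :: xs) g = g x + Lsum xs g.
Proof. reflexivity. Qed.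
Lemma Lsum_app {X} xs ys (g : X -> R) : Lsum (xs ++ ys) g = Lsum xs g + Lsum ys g.
Proof. induction xs; simpl. unfold Lsum; simpl; ring. unfold Lsum in *; simpl. rewrite IHxs. ring. Qed.
Lemma Lsum_flat_map {X Y} (h : X -> list Y) xs g : Lsum (flat_map h xs) g = Lsum xs (fun x => Lsum (h x) g).
Proof. induction xs; auto. simpl. rewrite Lsum_app, Lsum_cons, IHxs. auto. Qed.
Lemma Lsum_map {X Y} (h : X -> Y) xs g : Lsum (map h xs) g = Lsum xs (fun x => g (h x)).
Proof. unfold Lsum. rewrite map_map. auto. Qed.
Lemma Lsum_le {X} xs (f g : X -> R) : (forall x, In x xs -> f x <= g x) -> Lsum xs f <= Lsum xs g.
Proof. induction xs; intros H. unfold Lsum; simpl; lra. rewrite !Lsum_cons.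
  assert (f a <= g a) by (apply H; simpl; auto). assert (Lsum xs f <= Lsum xs g) by (apply IHxs; intros; apply H; simpl; auto). lra. Qed.
Lemma Lsum_add {X} xs (f g : X -> R) : Lsum xs (fun x => f x + g x) = Lsum xs f + Lsum xs g.
Proof. induction xs. unfold Lsum; simpl; ring. rewrite !Lsum_cons, IHxs. ring. Qed.
Lemma Lsum_scal {X} xs c (f : X -> R) : Lsum xs (fun x => c * f x) = c * Lsum xs f.
Proof. induction xs. unfold Lsum; simpl; ring. rewrite !Lsum_cons, IHxs. ring. Qed.
Lemma Lsum_zero {X} (xs : list X) : Lsum xs (fun _ => 0) = 0.
Proof. induction xs; auto. rewrite Lsum_cons, IHxs; ring. Qed.
Lemma Lsum_swap {X Y} (xs : list X) (ys : list Y) g :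
  Lsum xs (fun x => Lsum ys (fun y => g x y)) = Lsum ys (fun y => Lsum xs (fun x => g x y)).
Proof. induction xs. simpl. rewrite Lsum_zero. auto. rewrite Lsum_cons, IHxs, <- Lsum_add. auto. Qed.
Lemma Lsum_ext {X} xs (f g : X -> R) : (forall x, In x xs -> f x = g x) -> Lsum xs f = Lsum xs g.
Proof. intros H. apply Rle_antisym; apply Lsum_le; intros; rewrite H; auto; lra. Qed.
Lemma Lsum_const {X} (xs : list X) c : Lsum xs (fun _ => c) = INR (length xs) * c.
Proof. induction xs. unfold Lsum; simpl; ring. rewrite Lsum_cons, IHxs. simpl length. rewrite S_INR. ring. Qed.
Lemma Lsum_single_le (L : list R) m c : NoDup L -> 0 <= c ->
  Lsum L (fun x => if Req_dec_T m x then c else 0) <= c.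
Proof.
  induction L; intros Hn Hc. unfold Lsum; simpl; lra. inversion Hn; subst. rewrite Lsum_cons.
  destruct (Req_dec_T m a).
  - subst. rewrite (Lsum_ext _ _ (fun _ => 0)). rewrite Lsum_zero. lra.
    intros x Hx. destruct (Req_dec_T a x); auto. subst; contradiction.
  - pose proof (IHL H2 Hc). lra.
Qed.

Lemma tuples_spec l j ks : In ks (tuples l j) -> length ks = j /\ (forall k, In k ks -> (k < l)%nat).
Proof.
  revert ks. induction j; intros ks H; simpl in H.
  - destruct H as [<-|[]]. simpl. split; auto. intros k [].
  - apply in_flat_map in H. destruct H as [k [Hk H]]. apply in_map_iff in H. destruct H as [ks' [<- H]].
    apply in_seq in Hk. destruct (IHj ks' H). split. simpl; auto. intros k' [<-|Hk']. lia. auto.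
Qed.

Lemma exp_mono x y : x <= y -> exp x <= exp y.
Proof. intros [H|H]. left; apply exp_increasing; auto. right; subst; auto. Qed.
Lemma exp_INR_mul k x : exp (INR k * x) = exp x ^ k.
Proof. induction k. simpl. rewrite Rmult_0_l, exp_0. auto. rewrite S_INR.
  replace ((INR k + 1) * x) with (INR k * x + x) by ring. rewrite exp_plus, IHk. simpl. ring. Qed.
Lemma bernoulli y k : 0 <= y -> 1 + INR k * y <= (1 + y) ^ k.
Proof. intros Hy. induction k. simpl. lra. rewrite S_INR. simpl.
  assert (0 <= INR k) by apply pos_INR. nra. Qed.

Section Main.
Variables (n : nat) (A B : Mat) (N : nat) (l : nat) (lam : nat -> R) (E : nat -> Mat) (L : list R).
Hypothesis HA : hermitian n A.
Hypothesis HS : spectral_data n A l lam E.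
Hypothesis HN : (1 <= N)%nat.
Hypothesis HL : enumerates_chN l N lam L.

Let eB := Mexp n (Mscale (RtoC (/ INR N)) B).
Let Q := Mtuple n E eB.
Let D := MsubI eB.

Lemma EEm j k : (j < l)%nat -> (k < l)%nat ->
  Meq n (Mmul n (E j) (E k)) (if Nat.eq_dec j k then E k else Mzero).
Proof.
  intros Hj Hk. apply Meq_of_Mvec. intros v i Hi. rewrite Mvec_mul. rewrite (EE n A l lam E HA HS j k v Hj Hk i Hi).
  destruct (Nat.eq_dec j k); auto. unfold Mvec, Mzero. symmetry. transitivity (Csum n (fun _ => C0)).
  apply Csum_ext; intros; ring. apply Csum_0.
Qed.

Lemma step_norm k X : (k < l)%nat ->
  opnorm n (Mmul n (Mmul n (E k) eB) X) <= opnorm n (Mmul n (E k) X) + opnorm n D * opnorm n X.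
Proof.
  intros Hk.
  assert (H : Meq n (Mmul n (Mmul n (E k) eB) X) (Madd (Mmul n (E k) X) (Mmul n (Mmul n (E k) D) X))).
  { intros i j Hi Hj. transitivity (Mmul n (Madd (E k) (Mmul n (E k) D)) X i j).
    - apply Mmul_Meq; auto; [|apply Meq_refl]. intros a b Ha Hb.
      transitivity (Mmul n (E k) (Madd Mid D) a b).
      + apply Mmul_Meq; auto. apply Meq_refl. intros c e _ _. unfold D, MsubI, Csub, Copp, Madd, Cadd.
        apply Cx_ext; cbn [Re Im]; ring.
      + rewrite Mmul_add_r, Mmul_Mid_r by auto. reflexivity.
    - rewrite Mmul_add_l. reflexivity. }
  rewrite (opnorm_Meq_eq _ _ _ H). eapply Rle_trans. apply opnorm_add. apply Rplus_le_compat_l.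
  eapply Rle_trans. apply opnorm_mul. 
  pose proof (opnorm_E n A l lam E HS k Hk). pose proof (opnorm_nonneg n D). pose proof (opnorm_nonneg n X).
  pose proof (opnorm_nonneg n (E k)). pose proof (opnorm_mul n (E k) D).
  apply Rmult_le_compat_r; auto. nra.
Qed.

Lemma Lsum_seq_single k' l' c : (k' < l')%nat ->
  Lsum (seq 0 l') (fun k => if Nat.eq_dec k' k then c else 0) = c.
Proof.
  intros Hk'. assert (Hin : In k' (seq 0 l')) by (apply in_seq; lia). pose proof (seq_NoDup l' 0) as Hnd.
  induction (seq 0 l'). inversion Hin. inversion Hnd; subst. rewrite Lsum_cons.
  destruct (Nat.eq_dec k' a). subst. rewrite (Lsum_ext _ _ (fun _ => 0)). rewrite Lsum_zero. ring.
  intros x Hx. destruct (Nat.eq_dec a x); auto. subst; contradiction.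
  destruct Hin. congruence. rewrite IHl0; auto. ring.
Qed.

Lemma sum_EQ k' rest : (k' < l)%nat ->
  Lsum (seq 0 l) (fun k => opnorm n (Mmul n (E k) (Q (k' :: rest)))) = opnorm n (Q (k' :: rest)).
Proof.
  intros Hk'.
  rewrite (Lsum_ext _ _ (fun k => if Nat.eq_dec k' k then opnorm n (Q (k' :: rest)) else 0)).
  apply Lsum_seq_single; auto.
  intros k Hk. apply in_seq in Hk.
  change (Q (k' :: rest)) with (Mmul n (Mmul n (E k') eB) (Q rest)).
  assert (H1 : Meq n (Mmul n (E k) (Mmul n (Mmul n (E k') eB) (Q rest)))
                     (Mmul n (Mmul n (if Nat.eq_dec k k' then E k' else Mzero) eB) (Q rest))).
  { intros i j Hi Hj. rewrite <- Mmul_assoc. apply Mmul_Meq; auto; [|apply Meq_refl].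
    intros a b Ha Hb. rewrite <- Mmul_assoc. apply Mmul_Meq; auto; [apply EEm; lia | apply Meq_refl]. }
  rewrite (opnorm_Meq_eq _ _ _ H1).
  destruct (Nat.eq_dec k k'); destruct (Nat.eq_dec k' k); try lia; subst; auto.
  apply opnorm_zero. intros i j Hi Hj. unfold Mmul at 1.
  transitivity (Csum n (fun _ => C0)); [|apply Csum_0]. apply Csum_ext; intros.
  rewrite Mmul_zero_l. ring.
Qed.

Definition Fj j := Lsum (tuples l j) (fun ks => opnorm n (Q ks)).
Let d := opnorm n D.

Lemma F_step j : Fj (S j) <= Lsum (tuples l j) (fun ks => Lsum (seq 0 l) (fun k => opnorm n (Mmul n (E k) (Q ks)))) + INR l * d * Fj j.
Proof.
  unfold Fj. cbn [tuples]. rewrite Lsum_flat_map.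
  rewrite (Lsum_ext _ _ (fun k => Lsum (tuples l j) (fun ks => opnorm n (Q (k :: ks))))).
  2:{ intros k _. rewrite Lsum_map. auto. }
  rewrite Lsum_swap. rewrite <- Lsum_scal, <- Lsum_add. apply Lsum_le. intros ks _.
  replace (INR l * d * opnorm n (Q ks)) with (Lsum (seq 0 l) (fun _ => d * opnorm n (Q ks)))
    by (rewrite Lsum_const, length_seq; ring).
  rewrite <- Lsum_add. apply Lsum_le. intros k Hk. apply in_seq in Hk. apply step_norm. lia.
Qed.

Lemma d_nonneg : 0 <= d. Proof. apply opnorm_nonneg. Qed.
Lemma Fj_nonneg j : 0 <= Fj j.
Proof. unfold Fj. induction (tuples l j). unfold Lsum; simpl; lra. rewrite Lsum_cons. pose proof (opnorm_nonneg n (Q a)). lra. Qed.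

Lemma F_1 : Fj 1 <= INR l * (1 + INR l * d).
Proof.
  eapply Rle_trans. apply F_step. cbn [tuples]. unfold Fj. cbn [tuples].
  rewrite Lsum_cons. unfold Lsum at 2 3. cbn [map fold_right].
  assert (H1 : Lsum (seq 0 l) (fun k => opnorm n (Mmul n (E k) (Q nil))) <= INR l).
  { replace (INR l) with (Lsum (seq 0 l) (fun _ => 1)) by (rewrite Lsum_const, length_seq; ring).
    apply Lsum_le. intros k Hk. apply in_seq in Hk. eapply Rle_trans. apply opnorm_mul.
    pose proof (opnorm_E n A l lam E HS k ltac:(lia)). pose proof (opnorm_Mid n).
    pose proof (opnorm_nonneg n (E k)). pose proof (opnorm_nonneg n (Q nil)). change (Q nil) with Mid in *. nra. }
  pose proof (opnorm_Mid n). change (Q nil) with Mid in *. pose proof d_nonneg. pose proof (pos_INR l).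
  assert (INR l * d <= INR l * INR l * d).
  { destruct l. simpl; lra. rewrite S_INR. pose proof (pos_INR n0). nra. }
  rewrite Lsum_cons. unfold Lsum at 2. cbn [map fold_right]. change (Q nil) with Mid. pose proof (opnorm_nonneg n Mid). assert (INR l * d * (opnorm n Mid + 0) <= INR l * d) by (apply Rle_trans with (INR l * d * 1); [apply Rmult_le_compat_l; nra | lra]). nra.
Qed.

Lemma F_next j : (1 <= j)%nat -> Fj (S j) <= (1 + INR l * d) * Fj j.
Proof.
  intros Hj. eapply Rle_trans. apply F_step.
  rewrite (Lsum_ext (tuples l j) _ (fun ks => opnorm n (Q ks))).
  fold (Fj j). lra.
  intros ks Hks. destruct (tuples_spec l j ks Hks) as [Hlen Hall]. destruct ks as [|k' rest].
  simpl in Hlen; lia. apply sum_EQ. apply Hall; simpl; auto.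
Qed.

Lemma F_bound j : (1 <= j)%nat -> Fj j <= INR l * (1 + INR l * d) ^ j.
Proof.
  intros Hj. induction j. lia. destruct j. simpl. pose proof F_1. lra.
  eapply Rle_trans. apply F_next; lia. pose proof d_nonneg as Hd. pose proof (pos_INR l) as Hl.
  assert (0 <= 1 + INR l * d) by (pose proof (Rmult_le_pos _ _ Hl Hd); lra).
  replace (INR l * (1 + INR l * d) ^ S (S j)) with ((1 + INR l * d) * (INR l * (1 + INR l * d) ^ S j)) by (simpl; ring).
  apply Rmult_le_compat_l; auto. apply IHj; lia.
Qed.

Lemma MN_norm x : opnorm n (MN n l N lam E B x) <=
  Lsum (tuples l N) (fun ks => if Req_dec_T (tuple_mean lam N ks) x then opnorm n (Q ks) else 0).
Proof.
  unfold MN. cbv zeta. fold eB. eapply Rle_trans. apply opnorm_sum.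
  apply Lsum_le. intros ks _. destruct (Req_dec_T (tuple_mean lam N ks) x). apply Rle_refl.
  rewrite opnorm_zero. lra. apply Meq_refl.
Qed.

Lemma part2_sum : Lsum L (fun x => opnorm n (MN n l N lam E B x)) <= Fj N.
Proof.
  eapply Rle_trans. apply Lsum_le. intros x _. apply MN_norm.
  rewrite Lsum_swap. apply Lsum_le. intros ks _. apply Lsum_single_le. apply HL. apply opnorm_nonneg.
Qed.
End Main.

Lemma Nsum_ext l f g : (forall i, (i < l)%nat -> f i = g i) -> Nsum l f = Nsum l g.
Proof. induction l; simpl; intros H; auto. rewrite IHl by (intros; apply H; lia). rewrite H by lia; auto. Qed.
Lemma Nsum_add l f g : Nsum l (fun i => (f i + g i)%nat) = (Nsum l f + Nsum l g)%nat.
Proof. induction l; simpl; auto. rewrite IHl. lia. Qed.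
Lemma Nsum_0 l : Nsum l (fun _ => O) = O.
Proof. induction l; simpl; auto. rewrite IHl. auto. Qed.
Lemma Nsum_delta l k : (k < l)%nat -> Nsum l (fun j => if Nat.eq_dec k j then 1%nat else 0%nat) = 1%nat.
Proof.
  induction l; intros H. lia. simpl. destruct (Nat.eq_dec k l).
  - subst. rewrite (Nsum_ext _ _ (fun _ => O)). rewrite Nsum_0. auto.
    intros i Hi. destruct (Nat.eq_dec l i); auto; lia.
  - rewrite IHl by lia. auto.
Qed.
Lemma Rsum_delta l k c : (k < l)%nat -> Rsum l (fun j => if Nat.eq_dec k j then c j else 0) = c k.
Proof.
  induction l; intros H. lia. simpl. destruct (Nat.eq_dec k l).
  - subst. rewrite (Rsum_ext _ _ (fun _ => 0)). rewrite Rsum_0. ring.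
    intros i Hi. destruct (Nat.eq_dec l i); auto; lia.
  - rewrite IHl by lia. ring.
Qed.

Lemma Nsum_count l ks : (forall k, In k ks -> (k < l)%nat) ->
  Nsum l (fun j => count_occ Nat.eq_dec ks j) = length ks.
Proof.
  induction ks; intros H. simpl. apply Nsum_0.
  simpl count_occ. rewrite (Nsum_ext _ _ (fun j => ((if Nat.eq_dec a j then 1 else 0) + count_occ Nat.eq_dec ks j)%nat)).
  rewrite Nsum_add, Nsum_delta by (apply H; simpl; auto). simpl length.
  rewrite <- IHks by (intros; apply H; simpl; auto). reflexivity.
  intros i _. destruct (Nat.eq_dec a i); lia.
Qed.
Lemma Rsum_count l (lam : nat -> R) ks : (forall k, In k ks -> (k < l)%nat) ->
  Rsum l (fun j => INR (count_occ Nat.eq_dec ks j) * lam j) = fold_right Rplus 0 (map lam ks).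
Proof.
  induction ks; intros H. simpl. rewrite (Rsum_ext _ _ (fun _ => 0)). apply Rsum_0. intros; simpl; ring.
  simpl count_occ. rewrite (Rsum_ext _ _ (fun j => (if Nat.eq_dec a j then lam j else 0) + INR (count_occ Nat.eq_dec ks j) * lam j)).
  rewrite Rsum_add, (Rsum_delta l a lam) by (apply H; simpl; auto). simpl map. simpl fold_right. f_equal. apply IHks.
  intros; apply H; simpl; auto.
  intros i _. destruct (Nat.eq_dec a i). rewrite S_INR; ring. ring.
Qed.

Lemma mean_in_chN l N lam ks : In ks (tuples l N) -> in_chN l N lam (tuple_mean lam N ks).
Proof.
  intros H. destruct (tuples_spec l N ks H) as [Hlen Hall].
  exists (fun j => count_occ Nat.eq_dec ks j). split.
  rewrite Nsum_count; auto.
  unfold tuple_mean. rewrite <- (Rsum_count l lam ks Hall).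
  unfold Rdiv. rewrite Rmult_comm, <- Rsum_scal. apply Rsum_ext. intros; ring.
Qed.

Section Part1.
Variables (n : nat) (A B : Mat) (N : nat) (l : nat) (lam : nat -> R) (E : nat -> Mat) (L : list R) (t : Cx).
Hypothesis HA : hermitian n A.
Hypothesis HS : spectral_data n A l lam E.
Hypothesis HN : (1 <= N)%nat.
Hypothesis HL : enumerates_chN l N lam L.

Let eB := Mexp n (Mscale (RtoC (/ INR N)) B).
Let Q := Mtuple n E eB.
Let c := Cmul t (RtoC (/ INR N)).
Let w k := Cexp (Cmul c (RtoC (lam k))).
Let Y := Mmul n (Mexp n (Mscale c A)) eB.
Let Ysum := Msum_list (map (fun k => Mscale (w k) (Mmul n (E k) eB)) (seq 0 l)).
Let wt ks := fold_right (fun k acc => Cmul (w k) acc) C1 ks.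

Lemma Y_eq : Meq n Y Ysum.
Proof.
  intros i j Hi Hj. unfold Y. rewrite (Mmul_Meq n _ (F l E w) eB eB); auto.
  2:{ apply Mexp_herm; auto. } 2:{ apply Meq_refl. }
  unfold F, Ysum. rewrite Mmul_sum_l, Msum_list_map_ij. apply CLsum_ext. intros k _.
  rewrite Mmul_scale_l. reflexivity.
Qed.

Lemma pow_expand j : Meq n (Mpow n Y j) (Msum_list (map (fun ks => Mscale (wt ks) (Q ks)) (tuples l j))).
Proof.
  induction j; intros i j' Hi Hj.
  - simpl. unfold Madd, Mscale, Mzero. change (Q nil) with Mid. simpl wt. ring.
  - rewrite Mpow_S_l by auto. rewrite (Mmul_Meq n Y Ysum _ _ Y_eq IHj i j' Hi Hj).
    unfold Ysum. rewrite Mmul_sum_l, Msum_list_map_ij. cbn [tuples]. rewrite CLsum_flat_map.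
    apply CLsum_ext. intros k _. rewrite Mmul_scale_l, Mmul_sum_r, CLsum_map, <- CLsum_scal.
    apply CLsum_ext. intros ks _. rewrite Mmul_scale_r. unfold Mscale. simpl wt.
    change (Q (k :: ks)) with (Mmul n (Mmul n (E k) eB) (Q ks)). ring.
Qed.

Lemma wt_eq ks : wt ks = Cexp (Cmul t (RtoC (fold_right Rplus 0 (map lam ks) / INR N))).
Proof.
  assert (H : forall s, Cmul t (RtoC (s / INR N)) = Cmul c (RtoC s)).
  { intros s. unfold c, Rdiv. rewrite RtoC_mul. ring. }
  rewrite H. induction ks.
  - simpl. replace (Cmul c (RtoC 0)) with C0 by (rewrite RtoC_0; ring). rewrite Cexp_0. reflexivity.
  - change (wt (a :: ks)) with (Cmul (w a) (wt ks)). rewrite IHks. simpl map. simpl fold_right. unfold w.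
    rewrite <- Cexp_add. f_equal. rewrite RtoC_add. ring.
Qed.

Lemma part1 : Meq n (Mpow n (Mmul n (Mexp n (Mscale (Cmul t (RtoC (/ INR N))) A)) (Mexp n (Mscale (RtoC (/ INR N)) B))) N)
       (Msum_list (map (fun x => Mscale (Cexp (Cmul t (RtoC x))) (MN n l N lam E B x)) L)).
Proof.
  intros i j Hi Hj. fold eB c. fold Y. rewrite (pow_expand N i j Hi Hj).
  rewrite !Msum_list_map_ij.
  rewrite (CLsum_ext L _ (fun x => CLsum (tuples l N) (fun ks =>
      if Req_dec_T (tuple_mean lam N ks) x then Cmul (Cexp (Cmul t (RtoC (tuple_mean lam N ks)))) (Q ks i j) else C0))).
  2:{ intros x _. unfold Mscale, MN. cbv zeta. fold eB. rewrite Msum_list_map_ij, <- CLsum_scal.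
      apply CLsum_ext. intros ks _. destruct (Req_dec_T (tuple_mean lam N ks) x). subst x. reflexivity.
      unfold Mzero. ring. }
  rewrite CLsum_swap. apply CLsum_ext. intros ks Hks. unfold Mscale.
  rewrite (CLsum_single Req_dec_T L (tuple_mean lam N ks) (fun _ => Cmul (Cexp (Cmul t (RtoC (tuple_mean lam N ks)))) (Q ks i j))).
  rewrite wt_eq. reflexivity. apply HL. apply HL. apply mean_in_chN; auto.
Qed.
End Part1.

Lemma final_arith n l N b d : (l <= n)%nat -> (1 <= N)%nat -> 0 <= b -> 0 <= d -> d <= exp (b / INR N) - 1 ->
  INR l * (1 + INR l * d) ^ N <= INR n * exp (INR n * b).
Proof.
  intros Hln HN Hb Hd Hdb.
  assert (HNp : 0 < INR N) by (apply lt_0_INR; lia).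
  set (x := b / INR N). assert (Hx : 0 <= x) by (unfold x; apply Rmult_le_pos; auto; left; apply Rinv_0_lt_compat; auto).
  assert (Hex : 1 <= exp x) by (rewrite <- exp_0; apply exp_mono; auto).
  pose proof (pos_INR l) as Hl.
  assert (H1 : 1 + INR l * d <= exp (INR l * x)).
  { rewrite exp_INR_mul. replace (exp x) with (1 + (exp x - 1)) by ring.
    eapply Rle_trans; [|apply bernoulli; lra]. fold x in Hdb. nra. }
  assert (H2 : (1 + INR l * d) ^ N <= exp (INR l * b)).
  { replace (INR l * b) with (INR N * (INR l * x)) by (unfold x; field; lra).
    rewrite exp_INR_mul. apply pow_incr. split; auto. pose proof (Rmult_le_pos _ _ Hl Hd). lra. }
  assert (H3 : INR l <= INR n) by (apply le_INR; auto).
  assert (H4 : exp (INR l * b) <= exp (INR n * b)) by (apply exp_mono; nra).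
  assert (0 <= (1 + INR l * d) ^ N) by (apply pow_le; pose proof (Rmult_le_pos _ _ Hl Hd); lra).
  pose proof (exp_pos (INR l * b)).
  apply Rle_trans with (INR l * exp (INR l * b)). apply Rmult_le_compat_l; auto.
  apply Rmult_le_compat; lra.
Qed.

Theorem lemma6p2 (n : nat) (A B : Mat) (N : nat)
  (l : nat) (lam : nat -> R) (E : nat -> Mat) (L : list R) :
  hermitian n A ->
  spectral_data n A l lam E ->
  (1 <= N)%nat ->
  enumerates_chN l N lam L ->
  (forall t : Cx,
     Meq n
       (Mpow n (Mmul n (Mexp n (Mscale (Cmul t (RtoC (/ INR N))) A))
                       (Mexp n (Mscale (RtoC (/ INR N)) B))) N)
       (Msum_list (map (fun x => Mscale (Cexp (Cmul t (RtoC x))) (MN n l N lam E B x)) L)))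
  /\
  fold_right Rplus 0 (map (fun x => opnorm n (MN n l N lam E B x)) L)
    <= INR n * exp (INR n * opnorm n B).
Proof.
  intros HA HS HN HL. split.
  - intros t. apply (part1 n A B N l lam E L t HA HS HL).
  - change (fold_right Rplus 0 (map (fun x => opnorm n (MN n l N lam E B x)) L)) with
      (Lsum L (fun x => opnorm n (MN n l N lam E B x))).
    eapply Rle_trans. apply (part2_sum n B N l lam E L HL).
    eapply Rle_trans. apply (F_bound n A B N l lam E L HA HS HN HL N HN).
    apply final_arith.
    + apply (l_le_n n A l lam E HA HS).
    + auto.
    + apply opnorm_nonneg.
    + apply opnorm_nonneg.
    + eapply Rle_trans. apply Mexp_I_bound. apply Rplus_le_compat_r. apply exp_mono.
      eapply Rle_trans. apply opnorm_scale. rewrite Cmod_RtoC, Rabs_pos_eq. unfold Rdiv. lra.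
      left. apply Rinv_0_lt_compat. apply lt_0_INR. lia.
Qed.
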